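(* For every finite set $P\subset\mathbb{R}^2$ in general position, there exists a threshold $\alpha_0\in(0,\pi)$ such that for every $\alpha\in(\alpha_0,\pi)$ we have $M_a(P,\alpha)=M_b(P,\alpha)=M(P)$ and $M_a^\|(P,\alpha)=M_b^\|(P,\alpha)=2M(P)$.
   Context: General position means no three points are collinear. $M(P)$ denotes the maximum number of edges of a planar straight-line graph with vertex set $P$ (edges are pairwise noncrossing straight-line segments). For $\alpha\in(0,\pi)$, an $\alpha$-bend edge between points $a$ and $c$ is a polyline $(a,b,c)$ with a single bend point $b$ (not on the line $ac$) such that the interior angle of the triangle $abc$ at $b$ equals $\alpha$. An $\alpha$-arc edge between $a$ and $c$ is a circular arc with endpoints $a$ and $c$ and central angle $2(\pi-\alpha)$. An $\alpha$-bend graph (resp. $\alpha$-arc graph) is a simple graph embedded in the plane (vertices are distinct points; edges pairwise do not cross, meet only at common endpoints, and contain no vertex in their relative interior) in which every edge is an $\alpha$-bend (resp. $\alpha$-arc) edge; an $\alpha$-bend (resp. $\alpha$-arc) multigraph is defined the same way except that parallel edges are allowed. $M_a(P,\alpha)$, $M_b(P,\alpha)$, $M_a^\|(P,\alpha)$, $M_b^\|(P,\alpha)$ denote the maximum number of edges of an $\alpha$-arc graph, an $\alpha$-bend graph, an $\alpha$-arc multigraph, and an $\alpha$-bend multigraph, respectively, with vertex set $P$. *)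

(* Defs.v *)
From Stdlib Require Import Reals Lra List.
Open Scope R_scope.

Definition pt := (R * R)%type.

Definition padd (p q : pt) : pt := (fst p + fst q, snd p + snd q).
Definition psub (p q : pt) : pt := (fst p - fst q, snd p - snd q).
Definition pscale (t : R) (p : pt) : pt := (t * fst p, t * snd p).
Definition dot (u v : pt) : R := fst u * fst v + snd u * snd v.
Definition cross (u v : pt) : R := fst u * snd v - snd u * fst v.
Definition pnorm (u : pt) : R := sqrt (dot u u).

Definition collinear (p q r : pt) : Prop := cross (psub q p) (psub r p) = 0.

Definition general_position (P : list pt) : Prop :=
  forall p q r, In p P -> In q P -> In r P ->
    p <> q -> q <> r -> p <> r -> ~ collinear p q r.

Definition angle_at (a b c : pt) : R :=
  acos (dot (psub a b) (psub c b) / (pnorm (psub a b) * pnorm (psub c b))).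

Definition seg (p q : pt) (x : pt) : Prop :=
  exists t, 0 <= t <= 1 /\ x = padd p (pscale t (psub q p)).

Definition rot (t : R) (u : pt) : pt :=
  (cos t * fst u - sin t * snd u, sin t * fst u + cos t * snd u).

Record edge := mkEdge { e_src : pt; e_dst : pt; e_curve : pt -> Prop }.

Definition straight_edge (e : edge) : Prop :=
  e_src e <> e_dst e /\ forall x, e_curve e x <-> seg (e_src e) (e_dst e) x.

Definition bend_edge (alpha : R) (e : edge) : Prop :=
  exists b, ~ collinear (e_src e) b (e_dst e) /\
    angle_at (e_src e) b (e_dst e) = alpha /\
    forall x, e_curve e x <-> (seg (e_src e) b x \/ seg b (e_dst e) x).

(* alpha-arc edge: circular arc from a to c with center o and central angle
   2(pi - alpha), traversed counterclockwise (s = 1) or clockwise (s = -1) *)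
Definition arc_edge (alpha : R) (e : edge) : Prop :=
  e_src e <> e_dst e /\
  exists (o : pt) (s : R), (s = 1 \/ s = -1) /\
    e_dst e = padd o (rot (s * (2 * (PI - alpha))) (psub (e_src e) o)) /\
    forall x, e_curve e x <->
      exists t, 0 <= t <= 2 * (PI - alpha) /\
        x = padd o (rot (s * t) (psub (e_src e) o)).

Definition same_endpoints (e f : edge) : Prop :=
  (e_src e = e_src f /\ e_dst e = e_dst f) \/
  (e_src e = e_dst f /\ e_dst e = e_src f).

Definition is_endpoint (e : edge) (x : pt) : Prop := x = e_src e \/ x = e_dst e.

Definition dummy_edge : edge := mkEdge (0,0) (0,0) (fun _ => False).

Definition embedded_graph (edge_ok : edge -> Prop) (simple : bool)
    (P : list pt) (G : list edge) : Prop :=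
  NoDup P /\
  (forall e, In e G -> In (e_src e) P /\ In (e_dst e) P /\ edge_ok e) /\
  (forall e v, In e G -> In v P -> e_curve e v -> is_endpoint e v) /\
  (forall i j, (i < length G)%nat -> (j < length G)%nat -> i <> j ->
     let e := nth i G dummy_edge in let f := nth j G dummy_edge in
     (forall x, e_curve e x -> e_curve f x -> is_endpoint e x /\ is_endpoint f x) /\
     (simple = true -> ~ same_endpoints e f)).

Definition is_max_edges (Valid : list edge -> Prop) (m : nat) : Prop :=
  (exists G, Valid G /\ length G = m) /\ (forall G, Valid G -> (length G <= m)%nat).

Definition M_is (P : list pt) (m : nat) : Prop :=
  is_max_edges (embedded_graph straight_edge true P) m.
Definition Ma_is (P : list pt) (alpha : R) (m : nat) : Prop :=
  is_max_edges (embedded_graph (arc_edge alpha) true P) m.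
Definition Mb_is (P : list pt) (alpha : R) (m : nat) : Prop :=
  is_max_edges (embedded_graph (bend_edge alpha) true P) m.
Definition Ma_multi_is (P : list pt) (alpha : R) (m : nat) : Prop :=
  is_max_edges (embedded_graph (arc_edge alpha) false P) m.
Definition Mb_multi_is (P : list pt) (alpha : R) (m : nat) : Prop :=
  is_max_edges (embedded_graph (bend_edge alpha) false P) m.

(* Main.v *)
Require Import Defs.
From Stdlib Require Import Reals Lra Psatz List Ranalysis5 Classical ClassicalEpsilon Nsatz FunctionalExtensionality Lia.
Open Scope R_scope.

Definition cone (k:R) (a c x : pt) : Prop :=
  Rabs (cross (psub c a) (psub x a)) <= k * dot (psub c a) (psub x a).
Definition Dm k a c x := cone k a c x /\ cone k c a x.

Lemma fin_min {A} (L : list A) (Q : A -> R -> Prop) :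
  (forall x, In x L -> exists kap, 0 < kap /\ forall k, 0 < k <= kap -> Q x k) ->
  exists kap, 0 < kap /\ forall x, In x L -> forall k, 0 < k <= kap -> Q x k.
Proof.
  induction L as [|y L IH]; intros H.
  - exists 1; split; [lra|]; intros x [].
  - destruct IH as [k1 [Hk1 H1]].
    { intros x Hx; apply H; right; exact Hx. }
    destruct (H y (or_introl eq_refl)) as [k2 [Hk2 H2]].
    exists (Rmin k1 k2); split.
    + apply Rmin_case; lra.
    + intros x [<-|Hx] k Hk.
      * apply H2. split; [lra|]. pose proof (Rmin_r k1 k2); lra.
      * apply H1; auto. split; [lra|]. pose proof (Rmin_l k1 k2); lra.
Qed.

Lemma kap_cond (P : Prop) (Q : R -> Prop) :
  (P -> exists kap, 0 < kap /\ forall k, 0 < k <= kap -> Q k) ->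
  exists kap, 0 < kap /\ forall k, 0 < k <= kap -> P -> Q k.
Proof.
  intros H. destruct (classic P) as [HP|HP].
  - destruct (H HP) as [k [Hk Hq]]. exists k; split; auto.
  - exists 1; split; [lra|]. intros; contradiction.
Qed.

Ltac pt_simpl := unfold cross, dot, psub, padd, pscale in *; cbn [fst snd] in *.

Lemma V_tuple (a c v : pt) : cross (psub c a) (psub v a) <> 0 ->
  exists kap, 0 < kap /\ forall k, 0 < k <= kap -> ~ cone k a c v.
Proof.
  unfold cone. set (X := cross (psub c a) (psub v a)). set (D := dot (psub c a) (psub v a)).
  intros HX. exists (Rabs X / (Rabs D + 1)). assert (0 < Rabs X) by (apply Rabs_pos_lt; auto).
  pose proof (Rabs_pos D).
  split. { apply Rdiv_lt_0_compat; lra. }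
  intros k [Hk Hk2] Hc.
  assert (k * D <= k * Rabs D) by (apply Rmult_le_compat_l; [lra| apply Rle_abs]).
  assert (k * Rabs D <= Rabs X / (Rabs D + 1) * Rabs D) by (apply Rmult_le_compat_r; lra).
  assert (Rabs X / (Rabs D + 1) * Rabs D < Rabs X).
  { unfold Rdiv. apply (Rmult_lt_reg_r (Rabs D + 1)); [lra|].
    field_simplify; [nra|lra]. }
  lra.
Qed.

Lemma abs_le_sq (x y : R) : Rabs x <= y -> x^2 <= y^2.
Proof.
  intros H. pose proof (Rabs_pos x). rewrite <- (pow2_abs x). nra.
Qed.

Lemma sq_sub_le (a b : R) : (a-b)^2 <= 2*(a^2+b^2).
Proof. assert (0 <= (a+b)^2) by apply pow2_ge_0. nra. Qed.

Lemma S1_core (u1 u2 z1 z2 w1 w2 k : R) :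
  0 <= k ->
  Rabs (u1*w2 - u2*w1) <= k * (u1*w1+u2*w2) ->
  Rabs (z1*w2 - z2*w1) <= k * (z1*w1+z2*w2) ->
  4*k^2*((u1^2+u2^2)*(z1^2+z2^2)) < (u1*z2-u2*z1)^2 ->
  w1 = 0 /\ w2 = 0.
Proof.
  intros Hk H1 H2 H3.
  set (U := u1^2+u2^2) in *. set (Z := z1^2+z2^2) in *. set (W := w1^2+w2^2).
  set (K := u1*z2-u2*z1) in *.
  set (p := u1*w2 - u2*w1) in *. set (q := z1*w2 - z2*w1) in *.
  assert (E: K^2 * W = (q*u1 - p*z1)^2 + (q*u2 - p*z2)^2) by (unfold K,W,p,q; ring).
  pose proof (sq_sub_le (q*u1) (p*z1)). pose proof (sq_sub_le (q*u2) (p*z2)).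
  assert (E2: K^2 * W <= 2*(q^2*U + p^2*Z)).
  { rewrite E. apply Rle_trans with (2*((q*u1)^2+(p*z1)^2) + 2*((q*u2)^2+(p*z2)^2)); [lra|]. right; unfold U, Z; ring. }
  apply abs_le_sq in H1. apply abs_le_sq in H2.
  assert (C1: (u1*w1+u2*w2)^2 <= U*W).
  { assert (U*W - (u1*w1+u2*w2)^2 = p^2) by (unfold U,W,p; ring). pose proof (pow2_ge_0 p). lra. }
  assert (C2: (z1*w1+z2*w2)^2 <= Z*W).
  { assert (Z*W - (z1*w1+z2*w2)^2 = q^2) by (unfold Z,W,q; ring). pose proof (pow2_ge_0 q). lra. }
  assert (HU: 0 <= U) by (unfold U; nra). assert (HZ: 0 <= Z) by (unfold Z; nra).
  assert (HW: 0 <= W) by (unfold W; nra).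
  assert (E3: K^2 * W <= 4 * k^2 * (U*Z) * W).
  { assert (q^2*U <= k^2*(Z*W)*U).
    { apply Rmult_le_compat_r; [lra|]. 
      apply Rle_trans with (k^2*(z1*w1+z2*w2)^2); [nra|]. apply Rmult_le_compat_l; nra. }
    assert (p^2*Z <= k^2*(U*W)*Z).
    { apply Rmult_le_compat_r; [lra|].
      apply Rle_trans with (k^2*(u1*w1+u2*w2)^2); [nra|]. apply Rmult_le_compat_l; nra. }
    nra. }
  assert (W = 0) by nra.
  unfold W in *. split; nra.
Qed.

Lemma S1_tuple (a c d : pt) : cross (psub c a) (psub d a) <> 0 ->
  exists kap, 0 < kap /\ forall k, 0 < k <= kap ->
    forall x, cone k a c x -> cone k a d x -> x = a.
Proof.
  destruct a as [a1 a2], c as [c1 c2], d as [d1 d2].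
  unfold cone; pt_simpl.
  set (u1 := c1 - a1). set (u2 := c2-a2). set (z1 := d1-a1). set (z2 := d2 - a2).
  intros HK.
  set (K := u1*z2-u2*z1) in *.
  set (U := u1^2+u2^2). set (Z := z1^2+z2^2).
  assert (HU: 0 <= U) by (unfold U; nra). assert (HZ: 0 <= Z) by (unfold Z; nra).
  assert (HK2 : 0 < K^2) by (assert (K*K>0) by (apply Rsqr_pos_lt; exact HK); nra).
  assert (0 < Rabs K) by (apply Rabs_pos_lt; auto).
  exists (Rabs K / (U + Z + 1)). split. { apply Rdiv_lt_0_compat; lra. }
  intros k [Hk Hk2] [x1 x2] Hc Hd. cbn [fst snd] in *.
  assert (k * (U+Z+1) <= Rabs K).
  { apply Rmult_le_reg_r with (/ (U+Z+1)). { apply Rinv_0_lt_compat; lra. }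
    rewrite Rmult_assoc, Rinv_r by lra. lra. }
  assert (k^2 * (U+Z+1)^2 <= K^2).
  { replace (k^2*(U+Z+1)^2) with ((k*(U+Z+1))^2) by ring. rewrite <- (pow2_abs K).
    apply pow_incr; split; [nra | lra]. }
  assert (4*(U*Z) <= (U+Z)^2) by (pose proof (pow2_ge_0 (U-Z)); nra).
  destruct (S1_core u1 u2 z1 z2 (x1-a1) (x2-a2) k) as [E1 E2]; try lra.
  - fold K U Z.
    assert (k^2 * (4*(U*Z)) <= k^2 * (U+Z)^2) by (apply Rmult_le_compat_l; [nra|lra]).
    assert (k^2 * (U+Z)^2 < k^2 * (U+Z+1)^2) by (apply Rmult_lt_compat_l; nra).
    lra.
  - f_equal; lra.
Qed.

Definition n2 (u : pt) := dot u u.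

Lemma sumsq0 (x y : R) : x*x + y*y = 0 -> x = 0 /\ y = 0.
Proof.
  intros H. assert (x*x = 0) by (pose proof (Rle_0_sqr x); pose proof (Rle_0_sqr y); unfold Rsqr in *; lra).
  assert (y*y = 0) by lra. split; [destruct (Rmult_integral _ _ H0)|destruct (Rmult_integral _ _ H1)]; auto.
Qed.

Lemma n2_nonneg u : 0 <= n2 u.
Proof. destruct u as [x y]; unfold n2, dot; cbn [fst snd]. nra. Qed.

Lemma line_decomp z w : cross z w = 0 -> n2 z <> 0 -> w = pscale (dot z w / n2 z) z.
Proof.
  destruct z as [z1 z2], w as [w1 w2]. unfold n2. pt_simpl. intros H Hn.
  assert (E1 : w1 * (z1*z1+z2*z2) = (z1*w1+z2*w2) * z1).
  { replace (w1 * (z1*z1+z2*z2)) with ((z1*w1+z2*w2) * z1 - z2 * (z1 * w2 - z2 * w1)) by ring. rewrite H; ring. }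
  assert (E2 : w2 * (z1*z1+z2*z2) = (z1*w1+z2*w2) * z2).
  { replace (w2 * (z1*z1+z2*z2)) with ((z1*w1+z2*w2) * z2 + z1 * (z1 * w2 - z2 * w1)) by ring. rewrite H; ring. }
  f_equal.
  - apply (Rmult_eq_reg_r (z1*z1+z2*z2)); auto. rewrite E1. field; auto.
  - apply (Rmult_eq_reg_r (z1*z1+z2*z2)); auto. rewrite E2. field; auto.
Qed.

Lemma Dm_bounds k a c y : 0 < k -> Dm k a c y ->
  0 <= dot (psub c a) (psub y a) <= n2 (psub c a) /\
  Rabs (cross (psub c a) (psub y a)) <= k * n2 (psub c a).
Proof.
  intros Hk [H1 H2]. unfold cone, n2 in *.
  destruct a as [a1 a2], c as [c1 c2], y as [y1 y2]. pt_simpl.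
  pose proof (Rabs_pos ((c1 - a1) * (y2 - a2) - (c2 - a2) * (y1 - a1))).
  pose proof (Rabs_pos ((a1 - c1) * (y2 - c2) - (a2 - c2) * (y1 - c1))).
  assert (0 <= (c1 - a1) * (y1 - a1) + (c2 - a2) * (y2 - a2)) by nra.
  assert (0 <= (a1 - c1) * (y1 - c1) + (a2 - c2) * (y2 - c2)) by nra.
  split; [split; nra|].
  eapply Rle_trans; [exact H1|]. apply Rmult_le_compat_l; nra.
Qed.

Lemma X_tuple (a c b d : pt) (lam0 mu0 : R) :
  cross (psub c a) (psub d b) <> 0 -> 0 < mu0 < 1 ->
  padd a (pscale lam0 (psub c a)) = padd b (pscale mu0 (psub d b)) ->
  exists kap, 0 < kap /\ forall k, 0 < k <= kap ->
    forall y, Dm k a c y -> cross (psub d b) (psub y b) = 0 ->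
      exists mu, 0 < mu < 1 /\ y = padd b (pscale mu (psub d b)).
Proof.
  intros HK Hmu Hz.
  set (K := cross (psub c a) (psub d b)) in *.
  set (U := n2 (psub c a)).
  assert (HU : 0 <= U) by apply n2_nonneg.
  set (m := Rmin mu0 (1 - mu0)).
  assert (Hm : 0 < m) by (unfold m; apply Rmin_case; lra).
  assert (HaK : 0 < Rabs K) by (apply Rabs_pos_lt; auto).
  exists (m * Rabs K / (U + 1)). split. { apply Rdiv_lt_0_compat; [nra|lra]. }
  intros k [Hk Hk2] y Hy Hc.
  destruct (Dm_bounds k a c y Hk Hy) as [_ Hb]. fold U in Hb.
  assert (Hzn : n2 (psub d b) <> 0).
  { intro E. apply HK. unfold K. unfold n2 in E. destruct b as [b1 b2], d as [d1 d2], c as [c1 c2], a as [a1 a2]. pt_simpl.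
    destruct (sumsq0 _ _ E) as [E1 E2]. replace d1 with b1 by lra. replace d2 with b2 by lra. ring. }
  set (mu := dot (psub d b) (psub y b) / n2 (psub d b)).
  assert (Hy2 : y = padd b (pscale mu (psub d b))).
  { pose proof (line_decomp _ _ Hc Hzn) as E. fold mu in E. rewrite <- E.
    destruct y, b; unfold padd, psub; cbn [fst snd]; f_equal; ring. }
  assert (HX : cross (psub c a) (psub y a) = (mu - mu0) * K).
  { rewrite Hy2. unfold K. destruct a as [a1 a2], b as [b1 b2], c as [c1 c2], d as [d1 d2].
    unfold padd, pscale, psub in Hz. cbn [fst snd] in Hz.
    injection Hz; intros e2 e1. pt_simpl.
    assert (P1: (c1-a1)*(b2 - a2 + mu0*(d2-b2)) = (c1-a1)*(lam0*(c2-a2))) by (f_equal; lra).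
    assert (P2: (c2-a2)*(b1 - a1 + mu0*(d1-b1)) = (c2-a2)*(lam0*(c1-a1))) by (f_equal; lra).
    lra. }
  rewrite HX in Hb. rewrite Rabs_mult in Hb.
  exists mu. split; [|exact Hy2].
  assert (Rabs (mu - mu0) * Rabs K <= m * Rabs K / (U+1) * U).
  { eapply Rle_trans; [exact Hb|]. apply Rmult_le_compat_r; lra. }
  assert (m * Rabs K / (U+1) * U < m * Rabs K).
  { unfold Rdiv. apply (Rmult_lt_reg_r (U+1)); [lra|]. field_simplify; nra. }
  assert (Rabs (mu - mu0) < m) by nra.
  assert (m <= mu0) by apply Rmin_l. assert (m <= 1 - mu0) by apply Rmin_r.
  apply Rabs_def2 in H1. lra.
Qed.

Lemma abs_le_between y M : Rabs y <= M -> -M <= y <= M.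
Proof. unfold Rabs; destruct Rcase_abs; lra. Qed.

Lemma sep_half (a c b d : pt) : b <> d ->
  0 < cross (psub c a) (psub b a) * cross (psub c a) (psub d a) ->
  exists kap, 0 < kap /\ forall k, 0 < k <= kap ->
    forall x, Dm k a c x -> Dm k b d x -> False.
Proof.
  intros Hbd Hs.
  set (fb := cross (psub c a) (psub b a)) in *. set (fd := cross (psub c a) (psub d a)) in *.
  set (sg := if Rlt_dec 0 fb then 1 else -1).
  assert (Hsg : sg * sg = 1) by (unfold sg; destruct Rlt_dec; lra).
  assert (Hb : 0 < sg * fb /\ 0 < sg * fd).
  { unfold sg; destruct (Rlt_dec 0 fb) as [h|h]; [|apply Rnot_lt_le in h].
    - split; [lra|]. apply Rmult_lt_reg_l with fb; [lra|]. lra.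
    - assert (fb <> 0) by (intro E; rewrite E in Hs; lra).
      assert (fb < 0) by lra. split; [lra|]. nra. }
  destruct Hb as [Hb Hd].
  set (mn := Rmin (sg*fb) (sg*fd)).
  assert (Hmn : 0 < mn) by (unfold mn; apply Rmin_case; lra).
  set (U := n2 (psub c a)). set (Q := Rabs (dot (psub c a) (psub d b))).
  assert (HU : 0 <= U) by apply n2_nonneg. assert (HQ : 0 <= Q) by apply Rabs_pos.
  exists (mn / (U + Q + 1)). split; [apply Rdiv_lt_0_compat; lra|].
  intros k [Hk Hk2] x H1 H2.
  destruct (Dm_bounds k a c x Hk H1) as [_ B1]. fold U in B1.
  destruct (Dm_bounds k b d x Hk H2) as [[B2 B3] B4].
  set (Z := n2 (psub d b)) in *.
  set (D' := dot (psub d b) (psub x b)) in *. set (X' := cross (psub d b) (psub x b)) in *.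
  set (fx := cross (psub c a) (psub x a)) in *.
  assert (Id : Z * fx = (Z - D') * fb + D' * fd + X' * dot (psub c a) (psub d b)).
  { unfold Z, fx, D', X', fb, fd, n2. destruct a, b, c, d, x. pt_simpl. ring. }
  assert (HZ : 0 < Z).
  { destruct (Req_dec Z 0) as [E|E]; [|pose proof (n2_nonneg (psub d b)); fold Z in H; lra].
    exfalso. assert (E2: d = b).
    { unfold Z, n2 in E. destruct d as [d1 d2], b as [b1 b2]. pt_simpl. destruct (sumsq0 _ _ E).
      f_equal; lra. }
    auto. }
  assert (mb : mn <= sg*fb) by apply Rmin_l. assert (md : mn <= sg*fd) by apply Rmin_r.
  assert (L1 : Z * (sg * fx) >= Z * mn - k * Z * Q).
  { assert (Z * (sg*fx) = (Z - D') * (sg*fb) + D' * (sg*fd) + sg * X' * dot (psub c a) (psub d b)).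
    { transitivity (sg * (Z*fx)); [ring|]. rewrite Id. ring. }
    rewrite H.
    assert (Rabs (sg * X' * dot (psub c a) (psub d b)) <= k * Z * Q).
    { rewrite !Rabs_mult. assert (Rabs sg = 1) by (unfold sg; destruct Rlt_dec; [rewrite Rabs_R1 | rewrite Rabs_left by lra]; lra).
      rewrite H0. unfold Q. pose proof (Rabs_pos X'). apply Rmult_le_compat_r; [apply Rabs_pos| lra]. }
    apply abs_le_between in H0.
    assert ((Z - D') * (sg*fb) >= (Z - D') * mn) by (apply Rle_ge, Rmult_le_compat_l; lra).
    assert (D' * (sg*fd) >= D' * mn) by (apply Rle_ge, Rmult_le_compat_l; lra).
    lra. }
  assert (L2 : sg * fx >= mn - k * Q).
  { apply Rle_ge. apply Rmult_le_reg_l with Z; [lra|]. lra. }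
  assert (L3 : sg * fx <= k * U).
  { assert (Rabs (sg * fx) = Rabs fx) by (rewrite Rabs_mult; unfold sg; destruct Rlt_dec; [rewrite Rabs_R1 | rewrite Rabs_left by lra]; lra).
    pose proof (Rle_abs (sg*fx)). lra. }
  assert (k * (U + Q) < mn).
  { apply Rle_lt_trans with (mn / (U+Q+1) * (U+Q)). { apply Rmult_le_compat_r; lra. }
    unfold Rdiv. apply (Rmult_lt_reg_r (U+Q+1)); [lra|]. field_simplify; nra. }
  lra.
Qed.

Lemma opp_sign_frac (p q : R) : p * q < 0 -> 0 < p / (p - q) < 1.
Proof.
  intros H. destruct (Rlt_dec 0 p).
  - assert (q < 0) by nra. split; [apply Rdiv_lt_0_compat; lra|].
    apply (Rmult_lt_reg_r (p - q)); [lra|]. unfold Rdiv; rewrite Rmult_assoc, Rinv_l by lra. lra.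
  - assert (p < 0) by (destruct (Req_dec p 0); [subst; lra| lra]). assert (0 < q) by nra.
    replace (p / (p - q)) with ((-p) / (q - p)) by (field; lra).
    split; [apply Rdiv_lt_0_compat; lra|].
    apply (Rmult_lt_reg_r (q - p)); [lra|]. unfold Rdiv; rewrite Rmult_assoc, Rinv_l by lra. lra.
Qed.

Lemma seg_cross_point (a c b d : pt) :
  cross (psub c a) (psub b a) * cross (psub c a) (psub d a) < 0 ->
  cross (psub d b) (psub a b) * cross (psub d b) (psub c b) < 0 ->
  exists t mu, 0 < t < 1 /\ 0 < mu < 1 /\
    padd a (pscale t (psub c a)) = padd b (pscale mu (psub d b)).
Proof.
  set (fb := cross (psub c a) (psub b a)). set (fd := cross (psub c a) (psub d a)).
  set (ga := cross (psub d b) (psub a b)). set (gc := cross (psub d b) (psub c b)).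
  intros H1 H2.
  exists (ga / (ga - gc)), (fb / (fb - fd)).
  split; [apply opp_sign_frac; auto|]. split; [apply opp_sign_frac; auto|].
  assert (ga - gc <> 0) by nra. assert (fb - fd <> 0) by nra.
  unfold fb, fd, ga, gc in *. destruct a, b, c, d. pt_simpl. f_equal; field; auto.
Qed.

Lemma S2_tuple (a c b d : pt) : a <> c -> b <> d ->
  cross (psub c a) (psub b a) <> 0 -> cross (psub c a) (psub d a) <> 0 ->
  cross (psub d b) (psub a b) <> 0 -> cross (psub d b) (psub c b) <> 0 ->
  (forall y, seg a c y -> ~ seg b d y) ->
  exists kap, 0 < kap /\ forall k, 0 < k <= kap ->
    forall x, Dm k a c x -> Dm k b d x -> False.
Proof.
  intros Hac Hbd H1 H2 H3 H4 Hdis.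
  destruct (Rlt_dec 0 (cross (psub c a) (psub b a) * cross (psub c a) (psub d a))) as [h1|h1].
  { apply sep_half; auto. }
  destruct (Rlt_dec 0 (cross (psub d b) (psub a b) * cross (psub d b) (psub c b))) as [h2|h2].
  { destruct (sep_half b d a c Hac h2) as [kap [Hk Hq]]. exists kap; split; auto.
    intros k Hk2 x X1 X2. exact (Hq k Hk2 x X2 X1). }
  exfalso.
  assert (cross (psub c a) (psub b a) * cross (psub c a) (psub d a) < 0).
  { apply Rnot_lt_le in h1. destruct h1; auto. exfalso. apply Rmult_integral in H; tauto. }
  assert (cross (psub d b) (psub a b) * cross (psub d b) (psub c b) < 0).
  { apply Rnot_lt_le in h2. destruct h2; auto. exfalso. apply Rmult_integral in H0; tauto. }
  destruct (seg_cross_point a c b d H H0) as [t [mu [Ht [Hmu E]]]].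
  apply (Hdis (padd a (pscale t (psub c a)))).
  - exists t; split; [lra|auto].
  - exists mu; split; [lra|auto].
Qed.

Definition Good (P : list pt) (k : R) : Prop :=
  (forall a c v, In a P -> In c P -> In v P -> a <> c -> v <> a -> v <> c -> ~ cone k a c v) /\
  (forall a c d x, In a P -> In c P -> In d P -> a <> c -> a <> d -> c <> d ->
     cone k a c x -> cone k a d x -> x = a) /\
  (forall a c b d x, In a P -> In c P -> In b P -> In d P ->
     a <> c -> a <> b -> a <> d -> c <> b -> c <> d -> b <> d ->
     (forall y, seg a c y -> ~ seg b d y) -> Dm k a c x -> Dm k b d x -> False) /\
  (forall a c b d, In a P -> In c P -> In b P -> In d P ->
     a <> c -> a <> b -> a <> d -> c <> b -> c <> d -> b <> d ->
     (exists x, seg a c x /\ seg b d x) ->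
     forall y, Dm k a c y -> cross (psub d b) (psub y b) = 0 ->
       exists mu, 0 < mu < 1 /\ y = padd b (pscale mu (psub d b))).

Lemma gp_cross P p q r : general_position P -> In p P -> In q P -> In r P ->
  p <> q -> q <> r -> p <> r -> cross (psub q p) (psub r p) <> 0.
Proof. intros H Hp Hq Hr H1 H2 H3. exact (H p q r Hp Hq Hr H1 H2 H3). Qed.

Lemma four_fin {A} (P : list A) (Q : A -> A -> A -> A -> R -> Prop) :
  (forall a c b d, In a P -> In c P -> In b P -> In d P ->
     exists kap, 0 < kap /\ forall k, 0 < k <= kap -> Q a c b d k) ->
  exists kap, 0 < kap /\ forall k, 0 < k <= kap -> forall a c b d,
     In a P -> In c P -> In b P -> In d P -> Q a c b d k.
Proof.
  intros H.
  destruct (fin_min (list_prod P (list_prod P (list_prod P P)))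
     (fun x k => Q (fst x) (fst (snd x)) (fst (snd (snd x))) (snd (snd (snd x))) k)) as [kap [Hk Hq]].
  - intros [a [c [b d]]] Hx. cbn [fst snd].
    rewrite !in_prod_iff in Hx. destruct Hx as [? [? [? ?]]]. apply H; auto.
  - exists kap; split; [exact Hk|]. intros k Hkk a c b d Ha Hc Hb Hd.
    apply (Hq (a,(c,(b,d)))); auto. rewrite !in_prod_iff; auto.
Qed.

Lemma good_exists P : general_position P ->
  exists kap, 0 < kap /\ forall k, 0 < k <= kap -> Good P k.
Proof.
  intros GP.
  destruct (four_fin P (fun a c v _ k => a <> c -> v <> a -> v <> c -> ~ cone k a c v)) as [k1 [Hk1 Q1]].
  { intros a c v _ Ha Hc Hv _.
    destruct (kap_cond (a <> c /\ v <> a /\ v <> c) (fun k => ~ cone k a c v)) as [kap [Hk Hq]].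
    { intros [? [? ?]]. apply V_tuple. apply (gp_cross P); auto. }
    exists kap; split; [exact Hk|]. intros k Hkk ? ? ?; apply Hq; auto. }
  destruct (four_fin P (fun a c d _ k => a <> c -> a <> d -> c <> d -> forall x,
     cone k a c x -> cone k a d x -> x = a)) as [k2 [Hk2 Q2]].
  { intros a c d _ Ha Hc Hd _.
    destruct (kap_cond (a <> c /\ a <> d /\ c <> d) (fun k => forall x,
     cone k a c x -> cone k a d x -> x = a)) as [kap [Hk Hq]].
    { intros [? [? ?]]. apply S1_tuple. apply (gp_cross P); auto. }
    exists kap; split; [exact Hk|]. intros k Hkk ? ? ?; apply Hq; auto. }
  destruct (four_fin P (fun a c b d k => a <> c -> a <> b -> a <> d -> c <> b -> c <> d -> b <> d ->
     (forall y, seg a c y -> ~ seg b d y) -> forall x, Dm k a c x -> Dm k b d x -> False)) as [k3 [Hk3 Q3]].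
  { intros a c b d Ha Hc Hb Hd.
    destruct (kap_cond (a <> c /\ a <> b /\ a <> d /\ c <> b /\ c <> d /\ b <> d /\
        (forall y, seg a c y -> ~ seg b d y)) (fun k => forall x, Dm k a c x -> Dm k b d x -> False))
      as [kap [Hk Hq]].
    { intros [? [? [? [? [? [? ?]]]]]]. apply S2_tuple; auto; apply (gp_cross P); auto. }
    exists kap; split; [exact Hk|]. intros k Hkk ? ? ? ? ? ? ?; apply Hq; tauto. }
  destruct (four_fin P (fun a c b d k => a <> c -> a <> b -> a <> d -> c <> b -> c <> d -> b <> d ->
     (exists x, seg a c x /\ seg b d x) ->
     forall y, Dm k a c y -> cross (psub d b) (psub y b) = 0 ->
       exists mu, 0 < mu < 1 /\ y = padd b (pscale mu (psub d b)))) as [k4 [Hk4 Q4]].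
  { intros a c b d Ha Hc Hb Hd.
    destruct (kap_cond (a <> c /\ a <> b /\ a <> d /\ c <> b /\ c <> d /\ b <> d /\
        (exists x, seg a c x /\ seg b d x)) (fun k => forall y, Dm k a c y -> cross (psub d b) (psub y b) = 0 ->
       exists mu, 0 < mu < 1 /\ y = padd b (pscale mu (psub d b)))) as [kap [Hk Hq]].
    2:{ exists kap; split; [exact Hk|]. intros k Hkk ? ? ? ? ? ? ?; apply Hq; tauto. }
    intros [? [? [? [? [? [? [x [[t [Ht Ex]] [mu0 [Hmu Ey]]]]]]]]]].
    assert (Hcab := gp_cross P a c b GP Ha Hc Hb H H2 H0).
    assert (Hcad := gp_cross P a c d GP Ha Hc Hd H H3 H1).
    assert (Hm0 : mu0 <> 0).
    { intro E; subst mu0. apply Hcab. rewrite Ey in Ex.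
      assert (b = padd a (pscale t (psub c a))) by (rewrite <- Ex; destruct b, d; unfold padd, pscale; cbn; f_equal; ring).
      rewrite H5. destruct a, c; pt_simpl. ring. }
    assert (Hm1 : mu0 <> 1).
    { intro E; subst mu0. apply Hcad. rewrite Ey in Ex.
      assert (d = padd a (pscale t (psub c a))) by (rewrite <- Ex; destruct b, d; unfold padd, pscale, psub; cbn; f_equal; ring).
      rewrite H5. destruct a, c; pt_simpl. ring. }
    apply (X_tuple a c b d t mu0).
    - intro K0. apply Hcab.
      assert (E : psub b a = psub (pscale t (psub c a)) (pscale mu0 (psub d b))).
      { rewrite Ex in Ey. destruct a, b, c, d. unfold padd, pscale, psub in *. cbn [fst snd] in *.
        injection Ey; intros; f_equal; lra. }
      rewrite E. destruct a, b, c, d. pt_simpl. pt_simpl. nra.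
    - lra.
    - rewrite <- Ex, <- Ey. auto. }
  exists (Rmin (Rmin k1 k2) (Rmin k3 k4)). split.
  { repeat apply Rmin_case; lra. }
  intros k Hk.
  assert (k <= k1 /\ k <= k2 /\ k <= k3 /\ k <= k4) as [L1 [L2 [L3 L4]]].
  { pose proof (Rmin_l (Rmin k1 k2) (Rmin k3 k4)). pose proof (Rmin_r (Rmin k1 k2) (Rmin k3 k4)).
    pose proof (Rmin_l k1 k2). pose proof (Rmin_r k1 k2). pose proof (Rmin_l k3 k4). pose proof (Rmin_r k3 k4).
    lra. }
  split; [|split; [|split]].
  - intros a c v Ha Hc Hv. apply (Q1 k ltac:(lra) a c v a); auto.
  - intros a c d x Ha Hc Hd. intros; apply (Q2 k ltac:(lra) a c d a); auto.
  - intros a c b d x Ha Hc Hb Hd. intros; eapply (Q3 k ltac:(lra) a c b d); eauto.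
  - intros a c b d Ha Hc Hb Hd. intros; eapply (Q4 k ltac:(lra) a c b d); eauto.
Qed.

Lemma cont_nbhd f x eps : continuity_pt f x -> 0 < eps ->
  exists d, 0 < d /\ forall y, Rabs (y - x) < d -> Rabs (f y - f x) < eps.
Proof.
  intros H He. unfold continuity_pt, continue_in, limit1_in, limit_in in H.
  destruct (H eps He) as [d [Hd Hy]]. exists d; split; auto.
  intros y Hyd. destruct (Req_dec y x) as [->|Hne].
  - unfold Rminus; rewrite Rplus_opp_r, Rabs_R0; auto.
  - apply (Hy y). split; [split; [exact I| auto]| exact Hyd].
Qed.

Lemma last_zero (f : R -> R) : (forall s, 0 <= s <= 1 -> continuity_pt f s) ->
  f 0 < 0 -> 0 < f 1 ->
  exists s0, 0 <= s0 <= 1 /\ f s0 = 0 /\ forall s, s0 <= s <= 1 -> 0 <= f s.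
Proof.
  intros Hc H0 H1.
  set (E := fun s => 0 <= s <= 1 /\ f s <= 0).
  assert (Hb : bound E) by (exists 1; intros s [Hs _]; lra).
  assert (He : exists s, E s) by (exists 0; split; lra).
  destruct (completeness E Hb He) as [m [Hub Hlub]].
  assert (Hm0 : 0 <= m) by (apply Hub; split; lra).
  assert (Hm1 : m <= 1) by (apply Hlub; intros s [Hs _]; lra).
  assert (After : forall s, m < s <= 1 -> 0 < f s).
  { intros s Hs. destruct (Rlt_dec 0 (f s)); auto. exfalso.
    assert (E s) by (split; lra). apply Hub in H. lra. }
  assert (Hfm : f m = 0).
  { destruct (Rtotal_order (f m) 0) as [Hneg|[Heq|Hpos]]; auto; exfalso.
    - assert (m < 1) by (destruct (Req_dec m 1); [subst; lra| lra]).
      destruct (cont_nbhd f m (- f m) (Hc m ltac:(lra)) ltac:(lra)) as [d [Hd Hy]].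
      set (y := Rmin (m + d/2) 1).
      assert (m < y) by (unfold y; apply Rmin_case; lra).
      assert (y <= 1) by apply Rmin_r. assert (y <= m + d/2) by apply Rmin_l.
      assert (Hym : Rabs (y - m) < d) by (rewrite Rabs_right; lra).
      specialize (Hy y Hym). apply Rabs_def2 in Hy.
      assert (Ey : E y) by (split; lra). apply Hub in Ey. lra.
    - destruct (cont_nbhd f m (f m) (Hc m ltac:(lra)) ltac:(lra)) as [d [Hd Hy]].
      assert (is_upper_bound E (m - d)).
      { intros e [He1 He2]. assert (e <= m) by (apply Hub; split; auto).
        destruct (Rle_dec e (m - d)); auto. exfalso.
        assert (Hem : Rabs (e - m) < d) by (rewrite Rabs_left1; lra).
        specialize (Hy e Hem). apply Rabs_def2 in Hy. lra. }
      apply Hlub in H. lra. }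
  exists m. split; auto. split; auto. intros s Hs.
  destruct (Req_dec s m) as [->|Hne]; [lra|]. left; apply After; lra.
Qed.

Lemma cross_core (px py : R -> R) (C1 C2 : pt -> Prop) (G l : pt -> R) :
  (forall s, 0 <= s <= 1 -> C1 (px s, py s)) ->
  (forall s, 0 <= s <= 1 -> continuity_pt (fun s => G (px s, py s)) s) ->
  (forall s, 0 <= s <= 1 -> continuity_pt (fun s => l (px s, py s)) s) ->
  l (px 0, py 0) < 0 -> 0 < l (px 1, py 1) ->
  (forall s, 0 <= s <= 1 -> l (px s, py s) = 0 -> 0 < G (px s, py s)) ->
  G (px 1, py 1) < 0 ->
  (forall x, G x = 0 -> 0 <= l x -> C2 x) ->
  exists x, C1 x /\ C2 x.
Proof.
  intros HC1 HcG Hcl Hl0 Hl1 Hpos HG1 HC2.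
  destruct (last_zero (fun s => l (px s, py s)) Hcl Hl0 Hl1) as [s0 [Hs0 [Hz Haft]]].
  assert (s0 < 1) by (destruct (Req_dec s0 1); [subst; lra| lra]).
  assert (HGs0 := Hpos s0 Hs0 Hz).
  destruct (IVT_interv (fun s => - G (px s, py s)) s0 1) as [z [Hz1 Hz2]]; auto.
  - intros a Ha. apply continuity_pt_opp. apply HcG. lra.
  - lra.
  - lra.
  - exists (px z, py z). split; [apply HC1; lra|]. apply HC2; [lra|]. apply Haft; lra.
Qed.

Definition Gcont (G : pt -> R) := forall (fx fy : R -> R) s,
  continuity_pt fx s -> continuity_pt fy s -> continuity_pt (fun t => G (fx t, fy t)) s.

Definition nice (k : R) (e : edge) : Prop :=
  (forall x, e_curve e x -> Dm k (e_src e) (e_dst e) x) /\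
  (exists px py, (forall s, continuity_pt px s) /\ (forall s, continuity_pt py s) /\
     (px 0, py 0) = e_src e /\ (px 1, py 1) = e_dst e /\
     forall s, 0 <= s <= 1 -> e_curve e (px s, py s)) /\
  (exists G eps, (eps = 1 \/ eps = -1) /\ Gcont G /\
     (forall mu, 0 < mu < 1 -> 0 < G (padd (e_src e) (pscale mu (psub (e_dst e) (e_src e))))) /\
     (forall x, 0 <= G x -> 0 <= eps * cross (psub (e_dst e) (e_src e)) (psub x (e_src e)) ->
        Dm k (e_src e) (e_dst e) x) /\
     (forall x, G x = 0 -> 0 <= eps * cross (psub (e_dst e) (e_src e)) (psub x (e_src e)) ->
        e_curve e x)).

Lemma affine_comb (f : pt -> R) (A B C : R) (a c : pt) (t : R) :
  (forall x, f x = A * fst x + B * snd x + C) ->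
  f (padd a (pscale t (psub c a))) = (1 - t) * f a + t * f c.
Proof. intros H. rewrite !H. destruct a, c. unfold padd, pscale, psub; cbn [fst snd]. ring. Qed.

Lemma curves_cross_dir P k (C1 C2 : pt -> Prop) (px py : R -> R) (a c b d : pt) (G : pt -> R) (eps : R) :
  Good P k -> 0 < k ->
  In a P -> In c P -> In b P -> In d P ->
  a <> c -> a <> b -> a <> d -> c <> b -> c <> d -> b <> d ->
  (exists x, seg a c x /\ seg b d x) ->
  (forall s, continuity_pt px s) -> (forall s, continuity_pt py s) ->
  (forall s, 0 <= s <= 1 -> C1 (px s, py s) /\ Dm k a c (px s, py s)) ->
  (eps = 1 \/ eps = -1) -> Gcont G ->
  (forall mu, 0 < mu < 1 -> 0 < G (padd b (pscale mu (psub d b)))) ->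
  (forall x, 0 <= G x -> 0 <= eps * cross (psub d b) (psub x b) -> Dm k b d x) ->
  (forall x, G x = 0 -> 0 <= eps * cross (psub d b) (psub x b) -> C2 x) ->
  forall pa pc, (px 0, py 0) = pa -> (px 1, py 1) = pc ->
  (pa = a \/ pa = c) -> (pc = a \/ pc = c) ->
  eps * cross (psub d b) (psub pa b) < 0 -> 0 < eps * cross (psub d b) (psub pc b) ->
  exists x, C1 x /\ C2 x.
Proof.
  intros [GV [GS1 [GS2 GX]]] Hk Ha Hc Hb Hd H1 H2 H3 H4 H5 H6 Hseg Cx Cy HC1 Heps HG Hpos Hreg Hconv
    pa pc Epa Epc Hpa Hpc Hla Hlc.
  set (l := fun x => eps * cross (psub d b) (psub x b)).
  apply (cross_core px py C1 C2 G l).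
  - intros s Hs; apply HC1; auto.
  - intros s Hs. apply HG; auto.
  - intros s Hs. unfold l. destruct b as [b1 b2], d as [d1 d2]. pt_simpl. cbn [fst snd].
    pose proof (Cx s); pose proof (Cy s). reg.
  - unfold l; rewrite Epa; auto.
  - unfold l; rewrite Epc; auto.
  - intros s Hs Hl. destruct (HC1 s Hs) as [_ HD].
    assert (cross (psub d b) (psub (px s, py s) b) = 0).
    { unfold l in Hl. destruct Heps; subst eps; lra. }
    destruct (GX a c b d Ha Hc Hb Hd H1 H2 H3 H4 H5 H6 Hseg _ HD H) as [mu [Hmu E]].
    rewrite E. apply Hpos; auto.
  - rewrite Epc. destruct (Rlt_dec (G pc) 0) as [h|h]; auto. exfalso.
    apply Rnot_lt_le in h. specialize (Hreg pc h ltac:(lra)) as [Hc1 _].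
    destruct Hpc as [->| ->].
    + apply (GV b d a); auto.
    + apply (GV b d c); auto.
  - intros x Hx Hl. apply Hconv; auto.
Qed.

Lemma curves_cross P k e1 e2 : general_position P -> Good P k -> 0 < k -> nice k e1 -> nice k e2 ->
  In (e_src e1) P -> In (e_dst e1) P -> In (e_src e2) P -> In (e_dst e2) P ->
  e_src e1 <> e_dst e1 -> e_src e1 <> e_src e2 -> e_src e1 <> e_dst e2 ->
  e_dst e1 <> e_src e2 -> e_dst e1 <> e_dst e2 -> e_src e2 <> e_dst e2 ->
  (exists x, seg (e_src e1) (e_dst e1) x /\ seg (e_src e2) (e_dst e2) x) ->
  exists x, e_curve e1 x /\ e_curve e2 x.
Proof.
  intros GP Gd Hk [N1 [[px [py [Cx [Cy [E0 [E1 Hcur]]]]]] _]] [_ [_ [G [eps [Heps [HG [Hpos [Hreg Hconv]]]]]]]]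
    Ha Hc Hb Hd H1 H2 H3 H4 H5 H6 Hseg.
  set (a := e_src e1) in *. set (c := e_dst e1) in *. set (b := e_src e2) in *. set (d := e_dst e2) in *.
  set (l := fun x => eps * cross (psub d b) (psub x b)).
  assert (Hl : forall x, l x = (- eps * (snd d - snd b)) * fst x + (eps * (fst d - fst b)) * snd x
                     + eps * (- (fst d - fst b) * snd b + (snd d - snd b) * fst b)).
  { intros [x1 x2]. unfold l. destruct b, d. pt_simpl. ring. }
  assert (la0 : l a <> 0).
  { unfold l. intro E. assert (cross (psub d b) (psub a b) = 0) by (destruct Heps; subst; lra).
    apply (GP b d a); auto. }
  assert (lc0 : l c <> 0).
  { unfold l. intro E. assert (cross (psub d b) (psub c b) = 0) by (destruct Heps; subst; lra).
    apply (GP b d c); auto. }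
  assert (Hopp : l a * l c < 0).
  { destruct Hseg as [x [[t [Ht Ex]] [mu [Hmu Ey]]]].
    assert (l x = 0).
    { unfold l. rewrite Ey. destruct b, d. pt_simpl. ring. }
    rewrite Ex, (affine_comb l _ _ _ a c t Hl) in H.
    destruct (Rlt_dec (l a * l c) 0); auto. exfalso. apply Rnot_lt_le in n.
    assert (0 < l a * l c) by (destruct n; auto; symmetry in H0; apply Rmult_integral in H0; tauto).
    destruct (Rlt_dec 0 (l a)).
    + assert (0 < l c) by nra. destruct (Req_dec t 0); [subst; lra|]. nra.
    + assert (l a < 0) by lra. assert (l c < 0) by nra. destruct (Req_dec t 0); [subst; lra|]. nra. }
  assert (Hcur' : forall s, 0 <= s <= 1 -> e_curve e1 (px s, py s) /\ Dm k a c (px s, py s)).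
  { intros s Hs. split; [apply Hcur; auto| apply N1; apply Hcur; auto]. }
  destruct (Rlt_dec (l a) 0) as [Hneg|Hnn].
  - apply (curves_cross_dir P k (e_curve e1) (e_curve e2) px py a c b d G eps Gd Hk Ha Hc Hb Hd H1 H2 H3 H4 H5 H6 Hseg
      Cx Cy Hcur' Heps HG Hpos Hreg Hconv a c); auto.
    fold (l a) (l c). nra.
  - assert (0 < l a) by lra. assert (l c < 0) by nra.
    apply (curves_cross_dir P k (e_curve e1) (e_curve e2) (fun s => px (1 - s)) (fun s => py (1 - s)) a c b d G eps
      Gd Hk Ha Hc Hb Hd H1 H2 H3 H4 H5 H6 Hseg) with (pa := c) (pc := a); auto.
    + intros s. apply (continuity_pt_comp (fun s => 1 - s) px). reg. apply Cx.
    + intros s. apply (continuity_pt_comp (fun s => 1 - s) py). reg. apply Cy.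
    + intros s Hs. apply Hcur'. lra.
    + replace (1 - 0) with 1 by ring. auto.
    + replace (1 - 1) with 0 by ring. auto.
Qed.

Lemma rot_add x y v : rot x (rot y v) = rot (x + y) v.
Proof. destruct v. unfold rot; cbn [fst snd]. rewrite cos_plus, sin_plus. f_equal; ring. Qed.

Lemma rot_0 v : rot 0 v = v.
Proof. destruct v. unfold rot; cbn [fst snd]. rewrite cos_0, sin_0. f_equal; ring. Qed.

Lemma sgn_cos s t : (s = 1 \/ s = -1) -> cos (s * t) = cos t.
Proof. intros [-> | ->]; [f_equal; ring|]. replace (-1 * t) with (- t) by ring. apply cos_neg. Qed.

Lemma sgn_sin s t : (s = 1 \/ s = -1) -> sin (s * t) = s * sin t.
Proof. intros [-> | ->]; [rewrite !Rmult_1_l; auto|]. replace (-1 * t) with (- t) by ring. rewrite sin_neg; ring. Qed.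

Lemma padd_psub o a : padd o (psub a o) = a.
Proof. destruct o, a; unfold padd, psub; cbn [fst snd]; f_equal; ring. Qed.

Lemma rot_n2 t v : n2 (rot t v) = n2 v.
Proof.
  destruct v as [v1 v2]. unfold n2, rot, dot; cbn [fst snd].
  pose proof (sin2_cos2 t). unfold Rsqr in H.
  transitivity ((v1*v1+v2*v2) * (sin t * sin t + cos t * cos t)); [ring|]. rewrite H; ring.
Qed.

Lemma arc_cone_core (o v : pt) (s th tau : R) :
  (s = 1 \/ s = -1) -> 0 < th < PI/2 -> 0 <= tau <= th ->
  cone (sin th / cos th) (padd o v) (padd o (rot (s * (2*th)) v)) (padd o (rot (s * (2*tau)) v)).
Proof.
  intros Hs Hth Htau.
  assert (Sth : 0 < sin th) by (apply sin_gt_0; lra).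
  assert (Cth : 0 < cos th) by (apply cos_gt_0; lra).
  assert (Sta : 0 <= sin tau) by (apply sin_ge_0; lra).
  assert (Sd : 0 <= sin th * cos tau - cos th * sin tau).
  { rewrite <- sin_minus. apply sin_ge_0; lra. }
  unfold cone, rot. rewrite (sgn_cos s (2*th)), (sgn_cos s (2*tau)), (sgn_sin s (2*th)), (sgn_sin s (2*tau)) by auto.
  rewrite !cos_2a_sin, !sin_2a.
  destruct o as [o1 o2], v as [v1 v2]. pt_simpl.
  set (S := sin tau) in *. set (C := cos tau) in *. set (St := sin th) in *. set (Ct := cos th) in *.
  set (N := v1*v1+v2*v2).
  assert (HN : 0 <= N) by (unfold N; nra).
  match goal with |- Rabs ?X <= _ * ?D =>
    assert (EX : X = - s * (4 * St * S * N * (St * C - Ct * S)));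
    [| assert (ED : D = 4 * St * S * N * (St * S + Ct * C)); [| rewrite EX, ED]] end.
  { unfold N. destruct Hs as [-> | ->]; ring. }
  { unfold N. destruct Hs as [-> | ->]; ring. }
  rewrite Rabs_mult. replace (Rabs (- s)) with 1 by (destruct Hs as [-> | ->]; [rewrite Rabs_left by lra| rewrite Rabs_right by lra]; lra).
  assert (0 <= 4 * St * S * N) by (apply Rmult_le_pos; [nra|lra]).
  rewrite Rabs_right by nra. rewrite Rmult_1_l.
  apply Rmult_le_reg_l with Ct; [lra|].
  replace (Ct * (St / Ct * (4 * St * S * N * (St * S + Ct * C)))) with (St * (4 * St * S * N * (St * S + Ct * C))) by (field; lra).
  pose proof (sin2_cos2 th). fold St Ct in H0. unfold Rsqr in H0.
  assert (St * (4 * St * S * N * (St * S + Ct * C)) - Ct * (4 * St * S * N * (St * C - Ct * S)) = 4 * St * S * N * S) by (transitivity (4*St*S*N*S*(St*St+Ct*Ct)); [ring| rewrite H0; ring]).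
  nra.
Qed.


Lemma arc_Dm (o v : pt) (s th t : R) :
  (s = 1 \/ s = -1) -> 0 < th < PI/2 -> 0 <= t <= 2 * th ->
  Dm (sin th / cos th) (padd o v) (padd o (rot (s * (2*th)) v)) (padd o (rot (s * t) v)).
Proof.
  intros Hs Hth Ht. split.
  - replace (s * t) with (s * (2 * (t/2))) by field. apply arc_cone_core; auto; lra.
  - set (w := rot (s * (2 * th)) v).
    assert (E1 : padd o v = padd o (rot (- s * (2 * th)) w)).
    { unfold w. rewrite rot_add. replace (- s * (2 * th) + s * (2 * th)) with 0 by ring. rewrite rot_0; auto. }
    assert (E2 : padd o (rot (s * t) v) = padd o (rot (- s * (2 * (th - t/2))) w)).
    { unfold w. rewrite rot_add. f_equal. f_equal. field. }
    rewrite E1 at 1. rewrite E2. apply arc_cone_core; auto.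
    + destruct Hs; subst; lra.
    + lra.
Qed.

Lemma disk_cone (a c o x : pt) (sg h : R) :
  (sg = 1 \/ sg = -1) -> 0 < h ->
  o = (fst a + (fst c - fst a)/2 - sg*(h/2)*(snd c - snd a), snd a + (snd c - snd a)/2 + sg*(h/2)*(fst c - fst a)) ->
  n2 (psub x o) <= n2 (psub a o) ->
  sg * cross (psub c a) (psub x a) <= 0 ->
  cone (1/h) a c x.
Proof.
  intros Hs Hh Ho Hn Hx. subst o.
  destruct a as [a1 a2], c as [c1 c2], x as [x1 x2]. unfold cone, n2 in *. pt_simpl.
  set (u1 := c1 - a1) in *. set (u2 := c2 - a2) in *. set (w1 := x1 - a1). set (w2 := x2 - a2).
  set (D := u1 * w1 + u2 * w2). set (X := u1 * w2 - u2 * w1).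
  replace (x1 - a1) with w1 in * by auto. replace (x2 - a2) with w2 in * by auto.
  fold X in Hx. fold X D.
  assert (Hw : w1*w1 + w2*w2 <= D + sg * h * X).
  { unfold D, X. 
    replace (x1 - (a1 + u1/2 - sg*(h/2)*u2)) with (w1 - (u1/2 - sg*(h/2)*u2)) in Hn by (unfold w1; ring).
    replace (x2 - (a2 + u2/2 + sg*(h/2)*u1)) with (w2 - (u2/2 + sg*(h/2)*u1)) in Hn by (unfold w2; ring).
    replace (a1 - (a1 + u1/2 - sg*(h/2)*u2)) with (- (u1/2 - sg*(h/2)*u2)) in Hn by ring.
    replace (a2 - (a2 + u2/2 + sg*(h/2)*u1)) with (- (u2/2 + sg*(h/2)*u1)) in Hn by ring.
    nra. }
  assert (HX : Rabs X = - sg * X).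
  { destruct Hs as [-> | ->]. rewrite Rabs_left1; lra. rewrite Rabs_right; lra. }
  rewrite HX. 
  assert (h * (- sg * X) <= D) by (pose proof (Rle_0_sqr w1); pose proof (Rle_0_sqr w2); unfold Rsqr in *; nra).
  apply Rmult_le_reg_l with h; [lra|]. replace (h * (1/h * D)) with D by (field; lra). lra.
Qed.

Definition arc_ctr (a c : pt) (sg h : R) : pt :=
  (fst a + (fst c - fst a)/2 - sg*(h/2)*(snd c - snd a), snd a + (snd c - snd a)/2 + sg*(h/2)*(fst c - fst a)).

Lemma arc_center a c o s th : (s = 1 \/ s = -1) -> 0 < th < PI ->
  c = padd o (rot (s * (2 * th)) (psub a o)) -> o = arc_ctr a c s (cos th / sin th).
Proof.
  intros Hs Hth ->. unfold arc_ctr, rot.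
  rewrite (sgn_cos s (2*th)), (sgn_sin s (2*th)) by auto. rewrite cos_2a_sin, sin_2a.
  assert (Sth : 0 < sin th) by (apply sin_gt_0; lra).
  pose proof (sin2_cos2 th) as Hc. unfold Rsqr in Hc.
  set (St := sin th) in *. set (Ct := cos th) in *.
  destruct o as [o1 o2], a as [a1 a2]. pt_simpl. f_equal.
  - replace o1 with (o1 - (a1-o1)*(St*St+Ct*Ct-1)) at 1 by (rewrite Hc; ring).
    destruct Hs as [-> | ->]; field; lra.
  - replace o2 with (o2 - (a2-o2)*(St*St+Ct*Ct-1)) at 1 by (rewrite Hc; ring).
    destruct Hs as [-> | ->]; field; lra.
Qed.

Lemma arc_ctr_rev a c sg h : arc_ctr a c sg h = arc_ctr c a (- sg) h.
Proof. unfold arc_ctr. destruct a, c; cbn [fst snd]. f_equal; field. Qed.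

Lemma arc_chord_pos (o v : pt) (s th mu : R) :
  padd o v <> padd o (rot (s * (2 * th)) v) -> 0 < mu < 1 ->
  0 < n2 v - n2 (psub (padd (padd o v) (pscale mu (psub (padd o (rot (s * (2 * th)) v)) (padd o v)))) o).
Proof.
  intros Hne Hmu. set (w := rot (s * (2 * th)) v) in *.
  assert (Hw : n2 w = n2 v) by apply rot_n2.
  assert (Hvw : 0 < n2 (psub w v)).
  { destruct (Req_dec (n2 (psub w v)) 0) as [E|E]; [|pose proof (n2_nonneg (psub w v)); lra].
    exfalso. apply Hne. unfold n2 in E. destruct w, v, o. pt_simpl. destruct (sumsq0 _ _ E).
    unfold padd; cbn [fst snd]. f_equal; lra. }
  assert (E : n2 v - n2 (psub (padd (padd o v) (pscale mu (psub (padd o w) (padd o v)))) o)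
     = mu * (1 - mu) * n2 (psub w v)).
  { revert Hw. destruct w as [w1 w2], v as [v1 v2], o as [o1 o2]. unfold n2. pt_simpl. intros Hw. nra. }
  rewrite E. apply Rmult_lt_0_compat; [nra|lra].
Qed.

Lemma AB_nonneg (A B C2 : R) : 0 <= C2 < 1 -> 1 <= A + B -> A*A + B*B + 2*A*B*C2 = 1 -> 0 <= A /\ 0 <= B.
Proof.
  intros HC HAB HN.
  assert (forall P Q, 1 <= P + Q -> P*P + Q*Q + 2*P*Q*C2 = 1 -> 0 <= Q).
  { intros P Q H1 H2. destruct (Rle_dec 0 Q) as [|h]; auto. exfalso. apply Rnot_le_lt in h.
    assert (1 < P) by lra.
    assert (P * Q < 0) by nra.
    assert (2*P*Q*C2 >= 2*P*Q) by nra.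
    assert ((P+Q)*(P+Q) <= 1) by nra.
    assert ((P+Q)*(P+Q) >= 1) by nra.
    assert (2*P*Q*C2 = 2*P*Q) by nra.
    assert (C2 = 1) by (apply (Rmult_eq_reg_l (2*P*Q)); [lra| nra]). lra. }
  split; [apply (H B A)| apply (H A B)]; lra.
Qed.

Lemma arc_converse (o v x : pt) (s th : R) :
  (s = 1 \/ s = -1) -> 0 < th < PI/2 -> 1 <= 2 * (cos th * cos th) -> 0 < n2 v ->
  n2 (psub x o) = n2 v ->
  0 <= - s * cross (psub (padd o (rot (s * (2*th)) v)) (padd o v)) (psub x (padd o v)) ->
  exists t, 0 <= t <= 2 * th /\ x = padd o (rot (s * t) v).
Proof.
  intros Hs Hth HCt HN Hq Hside.
  assert (Hs2 : s * s = 1) by (destruct Hs as [-> | ->]; ring).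
  assert (S2p : 0 < sin (2*th)) by (apply sin_gt_0; lra).
  assert (C2e : cos (2*th) = 2 * (cos th * cos th) - 1).
  { rewrite cos_2a_sin. pose proof (sin2_cos2 th). unfold Rsqr in H. lra. }
  assert (C2b : 0 <= cos (2*th) < 1).
  { split; [lra|]. pose proof (COS_bound (2*th)) as [_ Hb]. destruct Hb; auto. exfalso.
    pose proof (sin2_cos2 (2*th)). unfold Rsqr in H0. rewrite H in H0. nra. }
  pose proof (sin2_cos2 (2*th)) as SC2. unfold Rsqr in SC2.
  set (S2 := sin (2*th)) in *. set (C2 := cos (2*th)) in *.
  set (N := n2 v) in *.
  set (q := psub x o).
  assert (Ex : x = padd o q) by (unfold q; rewrite padd_psub; auto).
  set (w := rot (s * (2*th)) v) in *.
  assert (Ew : w = (C2 * fst v - s * S2 * snd v, s * S2 * fst v + C2 * snd v)).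
  { unfold w, rot. rewrite sgn_cos, sgn_sin by auto. fold S2 C2. f_equal; ring. }
  set (X := cross v w).
  assert (EX : X = s * S2 * N).
  { unfold X, N, n2. rewrite Ew. destruct v. pt_simpl. cbn [fst snd]. ring. }
  assert (HX : X <> 0) by (rewrite EX; destruct Hs as [-> | ->]; nra).
  set (A := cross q w / X). set (B := cross v q / X).
  assert (F1 : q = (A * fst v + B * fst w, A * snd v + B * snd w)).
  { unfold A, B. unfold X in *. destruct q as [q1 q2], v as [v1 v2], w as [w1 w2]. pt_simpl.
    f_equal; field; auto. }
  assert (F2 : cross (psub (padd o w) (padd o v)) (psub x (padd o v)) = X * (1 - A - B)).
  { rewrite Ex. unfold A, B. unfold X in *. destruct q as [q1 q2], v as [v1 v2], w as [w1 w2], o as [o1 o2].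
    pt_simpl. field; auto. }
  assert (F2' : 1 <= A + B).
  { rewrite F2, EX in Hside. 
    assert (0 <= - (s * s) * S2 * N * (1 - A - B)) by lra. rewrite Hs2 in H.
    assert (0 < S2 * N) by nra. nra. }
  assert (Nw : n2 w = N) by (unfold w; apply rot_n2).
  assert (Dvw : dot v w = C2 * N).
  { unfold N, n2. rewrite Ew. destruct v; pt_simpl; cbn [fst snd]. ring. }
  assert (F3 : A*A + B*B + 2*A*B*C2 = 1).
  { assert (n2 q = N * (A*A + B*B + 2*A*B*C2)).
    { assert (n2 q = A*A*n2 v + 2*A*B*dot v w + B*B*n2 w) by (rewrite F1; unfold n2, dot; destruct v, w; cbn [fst snd]; ring).
      rewrite H, Nw, Dvw. fold N. ring. }
    unfold q in H. rewrite Hq in H. fold N in H. apply (Rmult_eq_reg_l N); lra. }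
  destruct (AB_nonneg A B C2 C2b F2' F3) as [HA HB].
  assert (Hrot : forall t, rot (s * t) v = (cos t * fst v - s * sin t * snd v, s * sin t * fst v + cos t * snd v)).
  { intros t. unfold rot. rewrite sgn_cos, sgn_sin by auto. f_equal; ring. }
  destruct (Req_dec B 0) as [B0|B0].
  { exists 0. split; [lra|]. rewrite Rmult_0_r, rot_0, Ex. f_equal.
    assert (A = 1) by (rewrite B0 in F3; nra).
    rewrite F1, H, B0. destruct v; cbn [fst snd]; f_equal; ring. }
  destruct (Req_dec A 0) as [A0|A0].
  { exists (2*th). split; [lra|]. rewrite Ex. f_equal. fold w.
    assert (B = 1) by (rewrite A0 in F3; nra).
    rewrite F1, H, A0. destruct w; cbn [fst snd]; f_equal; ring. }
  set (f := fun t => - (s * cross (rot (s * t) v) q)).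
  assert (Hf : forall t, f t = - (s * ((cos t * fst v - s * sin t * snd v) * snd q - (s * sin t * fst v + cos t * snd v) * fst q))).
  { intros t. unfold f. rewrite Hrot. unfold cross; cbn [fst snd]. ring. }
  assert (f0 : f 0 = - (B * S2 * N)).
  { unfold f. rewrite Rmult_0_r, rot_0. 
    assert (cross v q = B * X) by (unfold B; field; auto). rewrite H, EX.
    transitivity (- ((s*s) * B * S2 * N)); [ring| rewrite Hs2; ring]. }
  assert (f1 : f (2*th) = A * S2 * N).
  { unfold f. fold w.
    assert (cross w q = - (A * X)) by (unfold A; unfold cross; field; auto). rewrite H, EX.
    transitivity ((s*s) * A * S2 * N); [ring| rewrite Hs2; ring]. }
  destruct (IVT_interv f 0 (2*th)) as [t [Ht Hft]].
  - intros a _. unfold f, rot, cross. cbn [fst snd]. reg.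
  - lra.
  - rewrite f0. assert (0 < B) by lra. assert (0 < B * S2 * N) by (apply Rmult_lt_0_compat; [nra|lra]). lra.
  - rewrite f1. assert (0 < A) by lra. assert (0 < A * S2 * N) by (apply Rmult_lt_0_compat; [nra|lra]). lra.
  - exists t. split; [lra|]. rewrite Ex. f_equal.
    set (y := rot (s * t) v) in *.
    assert (Ny : n2 y = N) by (unfold y; apply rot_n2).
    assert (Cy : cross y q = 0).
    { unfold f in Hft. fold y in Hft. destruct Hs as [-> | ->]; lra. }
    assert (Hy0 : n2 y <> 0) by lra.
    pose proof (line_decomp y q Cy Hy0) as Eq.
    set (lam := dot y q / n2 y) in *.
    assert (Hl2 : lam * lam = 1).
    { assert (n2 q = lam * lam * n2 y) by (rewrite Eq at 1; unfold n2; destruct y; pt_simpl; cbn [fst snd]; ring).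
      unfold q in H at 1. rewrite Hq, Ny in H. fold N in H. apply (Rmult_eq_reg_l N); lra. }
    assert (Dyq : 0 <= dot y q).
    { assert (Eyy : S2 * fst y = sin (2*th - t) * fst v + sin t * fst w /\ S2 * snd y = sin (2*th - t) * snd v + sin t * snd w).
      { unfold y. rewrite Hrot, Ew. rewrite sin_minus. fold S2 C2. cbn [fst snd]. split; ring. }
      assert (S2 * dot y q = sin (2*th - t) * dot v q + sin t * dot w q).
      { unfold dot. destruct Eyy as [E1 E2]. transitivity ((S2 * fst y) * fst q + (S2 * snd y) * snd q); [ring|].
        rewrite E1, E2. ring. }
      assert (dot v q = N * (A + B * C2)).
      { assert (dot v q = A * n2 v + B * dot v w) by (rewrite F1; unfold n2, dot; destruct v, w; cbn [fst snd]; ring).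
        rewrite H0, Dvw. fold N. ring. }
      assert (dot w q = N * (A * C2 + B)).
      { assert (dot w q = A * dot v w + B * n2 w) by (rewrite F1; unfold n2, dot; destruct v, w; cbn [fst snd]; ring).
        rewrite H1, Dvw, Nw. ring. }
      assert (0 <= sin (2*th - t)) by (apply sin_ge_0; lra).
      assert (0 <= sin t) by (apply sin_ge_0; lra).
      assert (0 <= sin (2 * th - t) * dot v q + sin t * dot w q).
      { rewrite H0, H1. apply Rplus_le_le_0_compat; apply Rmult_le_pos; auto; apply Rmult_le_pos; nra. }
      nra. }
    assert (lam = 1).
    { destruct (Req_dec lam 1); auto. assert (lam = -1) by nra. exfalso.
      assert (dot y q = - N).
      { rewrite Eq. rewrite H0. rewrite <- Ny. unfold n2, dot, pscale. destruct y; cbn [fst snd]. ring. }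
      lra. }
    rewrite Eq, H. destruct y; unfold pscale; cbn [fst snd]. f_equal; ring.
Qed.

Lemma pair_eta (p : pt) : (fst p, snd p) = p.
Proof. destruct p; auto. Qed.

Lemma cross_rev (a c x : pt) : cross (psub a c) (psub x c) = - cross (psub c a) (psub x a).
Proof. destruct a, c, x; pt_simpl; ring. Qed.

Lemma arc_nice alpha e :
  0 < PI - alpha < PI/2 -> 1 <= 2 * (cos (PI - alpha) * cos (PI - alpha)) ->
  arc_edge alpha e -> nice (sin (PI - alpha) / cos (PI - alpha)) e.
Proof.
  remember (PI - alpha) as th eqn:Eth. intros Hth HCt [Hne [o [s [Hs [Hdst Hcur]]]]].
  rewrite <- Eth in Hdst, Hcur.
  set (a := e_src e) in *. set (c := e_dst e) in *.
  set (v := psub a o) in *.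
  assert (Ea : a = padd o v) by (unfold v; rewrite padd_psub; auto).
  assert (Sth : 0 < sin th) by (apply sin_gt_0; lra).
  assert (Cth : 0 < cos th) by (apply cos_gt_0; lra).
  assert (HN : 0 < n2 v).
  { destruct (Req_dec (n2 v) 0) as [E|E]; [|pose proof (n2_nonneg v); lra]. exfalso. apply Hne.
    fold a c. rewrite Hdst, Ea. assert (v = (0,0)).
    { unfold n2 in E. destruct v as [v1 v2]. pt_simpl. destruct (sumsq0 _ _ E). subst; auto. }
    rewrite H. unfold rot; cbn [fst snd]. f_equal. f_equal; ring. }
  split; [|split].
  - intros x Hx. apply Hcur in Hx as [t [Ht ->]]. fold a c. rewrite Hdst, Ea at 1. fold a c.
    apply arc_Dm; auto; lra.
  - exists (fun r => fst (padd o (rot (s * (2 * th * r)) v))), (fun r => snd (padd o (rot (s * (2 * th * r)) v))).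
    split; [|split; [|split; [|split]]].
    + intros r. unfold padd, rot. cbn [fst snd]. reg.
    + intros r. unfold padd, rot. cbn [fst snd]. reg.
    + rewrite pair_eta. rewrite Rmult_0_r, Rmult_0_r, rot_0. fold a. rewrite <- Ea; auto.
    + rewrite pair_eta. rewrite Rmult_1_r. fold c. rewrite Hdst. auto.
    + intros r Hr. rewrite pair_eta. apply Hcur. exists (2 * th * r). split; [nra|auto].
  - exists (fun x => n2 v - n2 (psub x o)), (- s). split; [destruct Hs; subst; [right|left]; ring|].
    split; [|split; [|split]].
    + intros fx fy r Hx Hy. unfold n2, dot, psub. cbn [fst snd]. reg.
    + intros mu Hmu. fold a c. rewrite Hdst. rewrite Ea.
      apply arc_chord_pos; auto. rewrite <- Ea. rewrite <- Hdst. auto.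
    + intros x HG Hside. fold a c in Hside |- *.
      set (h := cos th / sin th).
      assert (Hh : 0 < h) by (apply Rdiv_lt_0_compat; auto).
      replace (sin th / cos th) with (1/h) by (unfold h; field; lra).
      assert (Ho : o = arc_ctr a c s h) by (apply (arc_center a c o s th); auto; lra).
      split.
      * apply (disk_cone a c o x s h); auto.
        -- fold v. lra.
        -- destruct Hs as [-> | ->]; lra.
      * apply (disk_cone c a o x (-s) h); auto.
        -- destruct Hs as [-> | ->]; [right|left]; ring.
        -- rewrite Ho. apply arc_ctr_rev.
        -- rewrite Hdst. replace (psub (padd o (rot (s * (2 * th)) v)) o) with (rot (s * (2 * th)) v)
             by (destruct o, (rot _ v); unfold padd, psub; cbn [fst snd]; f_equal; ring).
           rewrite rot_n2. fold v. lra.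
        -- rewrite cross_rev. destruct Hs as [-> | ->]; lra.
    + intros x HG Hside. fold a c in Hside |- *. apply Hcur.
      destruct (arc_converse o v x s th Hs Hth HCt HN) as [t [Ht Et]].
      * lra.
      * rewrite <- Ea. rewrite <- Hdst. lra.
      * exists t; split; auto.
Qed.

Lemma cone_lin k a c x : cone k a c x <->
  (0 <= k * dot (psub c a) (psub x a) - cross (psub c a) (psub x a) /\
   0 <= k * dot (psub c a) (psub x a) + cross (psub c a) (psub x a)).
Proof.
  unfold cone. split.
  - intros H. apply abs_le_between in H. lra.
  - intros [H1 H2]. unfold Rabs; destruct Rcase_abs; lra.
Qed.

Definition comb3 (l1 l2 l3 : R) (p1 p2 p3 : pt) : pt :=
  (l1 * fst p1 + l2 * fst p2 + l3 * fst p3, l1 * snd p1 + l2 * snd p2 + l3 * snd p3).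

Lemma cone3 k a c p1 p2 p3 l1 l2 l3 :
  cone k a c p1 -> cone k a c p2 -> cone k a c p3 ->
  0 <= l1 -> 0 <= l2 -> 0 <= l3 -> l1 + l2 + l3 = 1 ->
  cone k a c (comb3 l1 l2 l3 p1 p2 p3).
Proof.
  rewrite !cone_lin. intros [A1 B1] [A2 B2] [A3 B3] H1 H2 H3 Hs.
  set (F := fun x => k * dot (psub c a) (psub x a) - cross (psub c a) (psub x a)) in *.
  set (F' := fun x => k * dot (psub c a) (psub x a) + cross (psub c a) (psub x a)) in *.
  assert (E : F (comb3 l1 l2 l3 p1 p2 p3) = l1 * F p1 + l2 * F p2 + l3 * F p3).
  { unfold F, comb3. replace l3 with (1 - l1 - l2) by lra. destruct a, c, p1, p2, p3. pt_simpl. ring. }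
  assert (E' : F' (comb3 l1 l2 l3 p1 p2 p3) = l1 * F' p1 + l2 * F' p2 + l3 * F' p3).
  { unfold F', comb3. replace l3 with (1 - l1 - l2) by lra. destruct a, c, p1, p2, p3. pt_simpl. ring. }
  change (0 <= F (comb3 l1 l2 l3 p1 p2 p3) /\ 0 <= F' (comb3 l1 l2 l3 p1 p2 p3)).
  rewrite E, E'. split; repeat apply Rplus_le_le_0_compat; apply Rmult_le_pos; auto.
Qed.

Lemma seg_comb3 p q t : padd p (pscale t (psub q p)) = comb3 (1 - t) t 0 p q p.
Proof. destruct p, q; unfold comb3; pt_simpl; f_equal; ring. Qed.

Lemma cone_self k a c : cone k a c a.
Proof. unfold cone. destruct a, c; pt_simpl.
  match goal with |- Rabs ?X <= _ * ?D => replace X with 0 by ring; replace D with 0 by ring end.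
  rewrite Rabs_R0; lra. Qed.

Lemma cone_tgt k a c : 0 <= k -> cone k a c c.
Proof. intros Hk. unfold cone. replace (cross (psub c a) (psub c a)) with 0 by (destruct a, c; pt_simpl; ring).
  rewrite Rabs_R0. apply Rmult_le_pos; [lra| apply (n2_nonneg (psub c a))]. Qed.

Lemma pnorm_sq u : pnorm u * pnorm u = n2 u.
Proof. unfold pnorm, n2. apply sqrt_sqrt. destruct u; unfold dot; cbn [fst snd]; nra. Qed.

Lemma bend_apex_cone (a c m : pt) (St Ct : R) :
  0 < St -> 0 < Ct -> St * St + Ct * Ct = 1 ->
  dot (psub a m) (psub c m) = - Ct * (pnorm (psub a m) * pnorm (psub c m)) ->
  cone (St / Ct) a c m.
Proof.
  intros HS HC H1 HD. unfold cone.
  set (Na := pnorm (psub a m)) in *. set (Nc := pnorm (psub c m)) in *.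
  assert (Ha : Na * Na = n2 (psub a m)) by apply pnorm_sq.
  assert (Hc : Nc * Nc = n2 (psub c m)) by apply pnorm_sq.
  assert (Na0 : 0 <= Na) by (unfold Na, pnorm; apply sqrt_pos).
  assert (Nc0 : 0 <= Nc) by (unfold Nc, pnorm; apply sqrt_pos).
  set (X := cross (psub c a) (psub m a)).
  assert (EX : X * X = (Na*Nc*St) * (Na*Nc*St)).
  { transitivity (n2 (psub a m) * n2 (psub c m) - dot (psub a m) (psub c m) * dot (psub a m) (psub c m)).
    { unfold X, n2. destruct a, c, m. pt_simpl. ring. }
    rewrite <- Ha, <- Hc, HD. transitivity ((Na*Nc)*(Na*Nc)*(1 - Ct*Ct)); [ring|]. rewrite <- H1. ring. }
  assert (AX : Rabs X = Na * Nc * St).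
  { rewrite <- (Rabs_right (Na*Nc*St)) by (apply Rle_ge; apply Rmult_le_pos; [nra|lra]).
    apply Rsqr_eq_abs_0. unfold Rsqr. auto. }
  rewrite AX.
  assert (ED : dot (psub c a) (psub m a) = Na * Na + Ct * (Na * Nc)).
  { rewrite Ha. transitivity (n2 (psub a m) - dot (psub a m) (psub c m)).
    { unfold n2. destruct a, c, m. pt_simpl. ring. } rewrite HD. ring. }
  rewrite ED. apply Rmult_le_reg_l with Ct; [lra|].
  replace (Ct * (St / Ct * (Na * Na + Ct * (Na * Nc)))) with (St * (Na * Na) + Ct * (St * (Na * Nc))) by (field; lra).
  assert (0 <= St * (Na * Na)) by (apply Rmult_le_pos; nra). nra.
Qed.

Lemma pnorm_pos_ne (p q : pt) : p <> q -> 0 < pnorm (psub p q).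
Proof.
  intros H. unfold pnorm. apply sqrt_lt_R0. destruct (Req_dec (dot (psub p q) (psub p q)) 0) as [E|E].
  - exfalso. apply H. destruct p, q. pt_simpl. destruct (sumsq0 _ _ E). f_equal; lra.
  - pose proof (n2_nonneg (psub p q)). unfold n2 in H0. lra.
Qed.

Lemma ncol_ne1 a m c : ~ collinear a m c -> a <> m.
Proof. intros H E. apply H. subst. unfold collinear. destruct m, c; pt_simpl; ring. Qed.
Lemma ncol_ne2 a m c : ~ collinear a m c -> c <> m.
Proof. intros H E. apply H. subst. unfold collinear. destruct a, m; pt_simpl; ring. Qed.
Lemma ncol_ne3 a m c : ~ collinear a m c -> a <> c.
Proof. intros H E. apply H. subst. unfold collinear. destruct m, c; pt_simpl; ring. Qed.

Lemma angle_dot a m c alpha : ~ collinear a m c -> angle_at a m c = alpha ->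
  dot (psub a m) (psub c m) = cos alpha * (pnorm (psub a m) * pnorm (psub c m)).
Proof.
  intros Hn Ha. unfold angle_at in Ha.
  pose proof (pnorm_pos_ne a m (ncol_ne1 a m c Hn)) as Na.
  pose proof (pnorm_pos_ne c m (ncol_ne2 a m c Hn)) as Nc.
  set (N := pnorm (psub a m) * pnorm (psub c m)) in *.
  assert (HN : 0 < N) by (unfold N; nra).
  set (D := dot (psub a m) (psub c m)) in *.
  assert (CS : D * D <= N * N).
  { unfold N. replace (pnorm (psub a m) * pnorm (psub c m) * (pnorm (psub a m) * pnorm (psub c m)))
      with ((pnorm (psub a m) * pnorm (psub a m)) * (pnorm (psub c m) * pnorm (psub c m))) by ring.
    rewrite !pnorm_sq. unfold D, n2. destruct a, m, c. pt_simpl.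
    match goal with |- _ <= ?R => idtac end. 
    set (x1 := r - r1). set (x2 := r0 - r2). set (y1 := r3 - r1). set (y2 := r4 - r2).
    assert (0 <= (x1*y2 - x2*y1)*(x1*y2 - x2*y1)) by apply Rle_0_sqr.
    nra. }
  assert (Hr : -1 <= D / N <= 1).
  { split.
    - apply Rmult_le_reg_r with N; auto. unfold Rdiv. rewrite Rmult_assoc, Rinv_l by lra. nra.
    - apply Rmult_le_reg_r with N; auto. unfold Rdiv. rewrite Rmult_assoc, Rinv_l by lra. nra. }
  pose proof (cos_acos _ Hr). rewrite Ha in H. rewrite H. field. lra.
Qed.

Lemma Rmin_abs p q : Rmin p q = (p + q - Rabs (p - q)) / 2.
Proof. unfold Rmin, Rabs. destruct Rle_dec; destruct Rcase_abs; lra. Qed.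

Lemma cont_abs f s : continuity_pt f s -> continuity_pt (fun t => Rabs (f t)) s.
Proof. intros H. apply (continuity_pt_comp f Rabs s H). apply Rcontinuity_abs. Qed.

Lemma cont_min f g s : continuity_pt f s -> continuity_pt g s -> continuity_pt (fun t => Rmin (f t) (g t)) s.
Proof.
  intros Hf Hg.
  replace (fun t => Rmin (f t) (g t)) with (fun t => (f t + g t - Rabs (f t - g t)) / 2)
    by (apply functional_extensionality; intros; rewrite Rmin_abs; auto).
  assert (continuity_pt (fun t => Rabs (f t - g t)) s) by (apply cont_abs; reg).
  reg.
Qed.

Lemma test_reg (a : R) s : continuity_pt (fun r => a * ((2*r + 1 - Rabs (2*r - 1))/2)) s.
Proof.
  assert (continuity_pt (fun r => Rabs (2*r - 1)) s) by (apply cont_abs; reg). reg.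
Qed.

Lemma seg_in_cone k a c p q x : cone k a c p -> cone k a c q -> seg p q x -> cone k a c x.
Proof.
  intros Hp Hq [t [Ht ->]]. rewrite seg_comb3. apply cone3; auto; lra.
Qed.

Lemma bend_nice alpha e :
  0 < PI - alpha < PI/2 -> bend_edge alpha e -> nice (sin (PI - alpha) / cos (PI - alpha)) e.
Proof.
  remember (PI - alpha) as th eqn:Eth. intros Hth [m [Hncol [Hang Hcur]]].
  set (a := e_src e) in *. set (c := e_dst e) in *.
  assert (Sth : 0 < sin th) by (apply sin_gt_0; lra).
  assert (Cth : 0 < cos th) by (apply cos_gt_0; lra).
  pose proof (sin2_cos2 th) as SC. unfold Rsqr in SC.
  set (k := sin th / cos th).
  assert (Hk : 0 <= k) by (unfold k; apply Rlt_le, Rdiv_lt_0_compat; auto).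
  assert (HD := angle_dot a m c alpha Hncol Hang).
  assert (Ecos : cos alpha = - cos th) by (rewrite Eth, Rtrigo_facts.cos_pi_minus; ring).
  rewrite Ecos in HD.
  assert (Cam : cone k a c m) by (apply bend_apex_cone; auto).
  assert (Ccm : cone k c a m).
  { apply bend_apex_cone; auto. unfold dot in *. rewrite Rmult_comm with (r1 := pnorm (psub c m)). lra. }
  assert (HDm : forall x, e_curve e x -> Dm k a c x).
  { intros x Hx. apply Hcur in Hx. split.
    - destruct Hx as [Hx|Hx]; [apply (seg_in_cone k a c a m)| apply (seg_in_cone k a c m c)]; auto;
        [apply cone_self| apply cone_tgt; auto].
    - destruct Hx as [Hx|Hx]; [apply (seg_in_cone k c a a m)| apply (seg_in_cone k c a m c)]; auto;
        [apply cone_tgt; auto| apply cone_self]. }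
  split; [exact HDm|split].
  - set (mn := fun r => (2*r + 1 - Rabs (2*r - 1))/2).
    set (mx := fun r => (2*r - 1 + Rabs (2*r - 1))/2).
    assert (Cabs : forall s, continuity_pt (fun r => Rabs (2*r - 1)) s) by (intros; apply cont_abs; reg).
    exists (fun r => fst a + mn r * (fst m - fst a) + mx r * (fst c - fst m)),
           (fun r => snd a + mn r * (snd m - snd a) + mx r * (snd c - snd m)).
    split; [|split; [|split; [|split]]].
    + intros s. unfold mn, mx. pose proof (Cabs s). reg.
    + intros s. unfold mn, mx. pose proof (Cabs s). reg.
    + unfold mn, mx. replace (2*0-1) with (-1) by ring. rewrite Rabs_left by lra.
      fold a c; apply injective_projections; cbn [fst snd]; field.
    + unfold mn, mx. replace (2*1-1) with 1 by ring. rewrite Rabs_R1.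
      fold a c; apply injective_projections; cbn [fst snd]; field.
    + intros r Hr. apply Hcur. unfold mn, mx. destruct (Rle_dec r (1/2)).
      * left. rewrite Rabs_left1 by lra. exists (2*r). split; [lra|].
        unfold padd, pscale, psub; apply injective_projections; cbn [fst snd]; field.
      * right. rewrite Rabs_right by lra. exists (2*r-1). split; [lra|].
        unfold padd, pscale, psub; apply injective_projections; cbn [fst snd]; field.
  - set (O := cross (psub c a) (psub m a)).
    assert (HO : O <> 0).
    { intro E. apply Hncol. unfold collinear. unfold O in E. destruct a, m, c. pt_simpl. lra. }
    set (eps := if Rlt_dec 0 O then 1 else -1).
    assert (Heps : eps = 1 \/ eps = -1) by (unfold eps; destruct Rlt_dec; auto).
    assert (HeO : 0 < eps * O).
    { unfold eps; destruct Rlt_dec; [lra|]. assert (O < 0) by (apply Rnot_lt_le in n; destruct n; tauto). lra. }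
    set (l0 := fun x => eps * cross (psub c a) (psub x a)).
    set (l1 := fun x => eps * cross (psub m c) (psub x c)).
    set (l2 := fun x => eps * cross (psub a m) (psub x m)).
    assert (Sum : forall x, l0 x + l1 x + l2 x = eps * O).
    { intros x. unfold l0, l1, l2, O. destruct a, c, m, x. pt_simpl. ring. }
    assert (Bar : forall x, x = comb3 (l1 x / (eps * O)) (l2 x / (eps * O)) (l0 x / (eps * O)) a c m).
    { intros x. pose proof (Sum x) as S. unfold l0, l1, l2, O, comb3 in *. destruct a, c, m, x. pt_simpl.
      f_equal; apply (Rmult_eq_reg_l (eps * ((r1 - r) * (r4 - r0) - (r2 - r0) * (r3 - r)))); try lra;
      field_simplify; try lra; rewrite <- S; ring. }
    exists (fun x => Rmin (l1 x) (l2 x)), eps. split; [auto|]. split; [|split; [|split]].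
    + intros fx fy s Hx Hy. apply cont_min; unfold l1, l2; destruct m, c, a; pt_simpl; reg.
    + intros mu Hmu. fold a c.
      assert (E1 : l1 (padd a (pscale mu (psub c a))) = (1 - mu) * (eps * O))
        by (unfold l1, O; destruct a, c, m; pt_simpl; ring).
      assert (E2 : l2 (padd a (pscale mu (psub c a))) = mu * (eps * O))
        by (unfold l2, O; destruct a, c, m; pt_simpl; ring).
      rewrite E1, E2. apply Rmin_case; apply Rmult_lt_0_compat; lra.
    + intros x HG Hl0. fold a c in Hl0 |- *.
      assert (0 <= l1 x) by (pose proof (Rmin_l (l1 x) (l2 x)); lra).
      assert (0 <= l2 x) by (pose proof (Rmin_r (l1 x) (l2 x)); lra).
      fold (l0 x) in Hl0.
      assert (Hw : 0 <= l1 x / (eps * O) /\ 0 <= l2 x / (eps * O) /\ 0 <= l0 x / (eps * O) /\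
                  l1 x / (eps * O) + l2 x / (eps * O) + l0 x / (eps * O) = 1).
      { split; [|split; [|split]]; try (apply Rmult_le_pos; [auto| apply Rlt_le, Rinv_0_lt_compat; auto]).
        assert (H' : l1 x + l2 x + l0 x = eps*O) by (rewrite <- (Sum x); ring).
        unfold Rdiv; rewrite <- !Rmult_plus_distr_r, H', Rinv_r; lra. }
      destruct Hw as [W1 [W2 [W3 W4]]].
      rewrite (Bar x). split.
      * apply cone3; auto; [apply cone_self| apply cone_tgt; auto].
      * apply cone3; auto; [apply cone_tgt; auto| apply cone_self].
    + intros x HG Hl0. fold a c in Hl0 |- *. fold (l0 x) in Hl0. apply Hcur.
      assert (Hc : (l2 x = 0 /\ 0 <= l1 x) \/ (l1 x = 0 /\ 0 <= l2 x)).
      { unfold Rmin in HG. destruct Rle_dec; [right|left]; lra. }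
      pose proof (Sum x) as S. pose proof (Bar x) as B.
      destruct Hc as [[H2 H1]|[H1 H2]].
      * left. exists (l0 x / (eps * O)). split.
        { split; [apply Rmult_le_pos; [auto| apply Rlt_le, Rinv_0_lt_compat; auto]|].
          apply Rmult_le_reg_r with (eps * O); auto. unfold Rdiv; rewrite Rmult_assoc, Rinv_l by lra. lra. }
        rewrite B at 1. rewrite H2. unfold comb3. destruct a, m, c. unfold padd, pscale, psub. cbn [fst snd].
        f_equal; field_simplify; try lra;
          (replace (l1 x) with (eps * O - l0 x) by lra); field; lra.
      * right. exists (l2 x / (eps * O)). split.
        { split; [apply Rmult_le_pos; [auto| apply Rlt_le, Rinv_0_lt_compat; auto]|].
          apply Rmult_le_reg_r with (eps * O); auto. unfold Rdiv; rewrite Rmult_assoc, Rinv_l by lra. lra. }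
        rewrite B at 1. rewrite H1. unfold comb3. destruct a, m, c. unfold padd, pscale, psub. cbn [fst snd].
        f_equal; field_simplify; try lra;
          (replace (l0 x) with (eps * O - l2 x) by lra); field; lra.
Qed.

Inductive pw {A} (R : A -> A -> Prop) : list A -> Prop :=
| pw_nil : pw R nil
| pw_cons x l : (forall y, In y l -> R x y) -> pw R l -> pw R (x :: l).

Lemma nth_pw {A} (R : A -> A -> Prop) (d : A) (l : list A) :
  (forall x y, R x y -> R y x) ->
  (forall i j, (i < length l)%nat -> (j < length l)%nat -> i <> j -> R (nth i l d) (nth j l d)) <-> pw R l.
Proof.
  intros Hsym. induction l as [|x l IH]; split.
  - intros; constructor.
  - intros _ i j Hi; simpl in Hi; lia.
  - intros H. constructor.
    + intros y Hy. destruct (In_nth l y d Hy) as [j [Hj Ej]]. subst y.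
      apply (H 0%nat (S j)); simpl; lia.
    + apply IH. intros i j Hi Hj Hij. apply (H (S i) (S j)); simpl; lia.
  - intros Hp. inversion Hp; subst. intros i j Hi Hj Hij. destruct i, j; simpl in *.
    + lia.
    + apply H1. apply nth_In. lia.
    + apply Hsym. apply H1. apply nth_In. lia.
    + apply IH; auto; lia.
Qed.

Lemma pw_In {A} (R : A -> A -> Prop) l x y : pw R l -> In x l -> In y l -> x <> y -> R x y \/ R y x.
Proof.
  induction 1 as [|z l Hz Hp IH]; intros Hx Hy Hne; [destruct Hx|].
  destruct Hx as [<-|Hx], Hy as [<-|Hy].
  - tauto.
  - left; auto.
  - right; auto.
  - auto.
Qed.

Lemma pw_filter {A} (R : A -> A -> Prop) f l : pw R l -> pw R (filter f l).
Proof.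
  induction 1; simpl; [constructor|]. destruct (f x); auto.
  constructor; auto. intros y Hy. apply filter_In in Hy. apply H; tauto.
Qed.

Lemma pw_map {A B} (R : A -> A -> Prop) (R' : B -> B -> Prop) (f : A -> B) l :
  pw R l -> (forall x y, In x l -> In y l -> R x y -> R' (f x) (f y)) -> pw R' (map f l).
Proof.
  induction 1 as [|x l Hx Hp IH]; intros H; simpl; constructor.
  - intros y Hy. apply in_map_iff in Hy as [z [<- Hz]]. apply H; simpl; auto.
  - apply IH. intros; apply H; simpl; auto.
Qed.

Lemma pw_app {A} (R : A -> A -> Prop) l1 l2 : pw R l1 -> pw R l2 ->
  (forall x y, In x l1 -> In y l2 -> R x y) -> pw R (l1 ++ l2).
Proof.
  induction 1 as [|x l Hx Hp IH]; intros H2 H; simpl; auto.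
  constructor.
  - intros y Hy. apply in_app_or in Hy as [Hy|Hy]; [apply Hx; auto| apply H; simpl; auto].
  - apply IH; auto. intros; apply H; simpl; auto.
Qed.

Lemma pw_impl {A} (R R' : A -> A -> Prop) l : pw R l -> (forall x y, In x l -> In y l -> R x y -> R' x y) -> pw R' l.
Proof.
  induction 1 as [|x l Hx Hp IH]; intros H'; constructor.
  - intros y Hy; apply H'; simpl; auto.
  - apply IH; intros; apply H'; simpl; auto.
Qed.

Definition decP (P : Prop) : bool := if excluded_middle_informative P then true else false.
Lemma decP_true P : decP P = true <-> P.
Proof. unfold decP; destruct excluded_middle_informative; split; auto; discriminate. Qed.

Lemma count2 {A} (R Eq : A -> A -> Prop) : forall n (l : list A), (length l <= n)%nat ->
  pw R l ->
  (forall x y z, In x l -> In y l -> In z l -> R x y -> R x z -> R y z -> Eq x y -> Eq x z -> False) ->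
  exists H, incl H l /\ pw (fun x y => R x y /\ ~ Eq x y) H /\ (length l <= 2 * length H)%nat.
Proof.
  induction n as [|n IH]; intros l Hl Hp Ht.
  - destruct l; simpl in Hl; [|lia]. exists nil. split; [intros ? []|]. split; [constructor| simpl; lia].
  - destruct l as [|x l'].
    + exists nil. split; [intros ? []|]. split; [constructor| simpl; lia].
    + inversion Hp as [|? ? Hx Hp']; subst.
      set (G1 := filter (fun y => decP (Eq x y)) l').
      set (G2 := filter (fun y => negb (decP (Eq x y))) l').
      assert (HL : (length G1 + length G2 = length l')%nat) by apply filter_length.
      assert (H1 : (length G1 <= 1)%nat).
      { destruct G1 as [|y [|z r]] eqn:EG; simpl; try lia. exfalso.
        assert (Iy : In y G1) by (rewrite EG; simpl; auto).
        assert (Iz : In z G1) by (rewrite EG; simpl; auto).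
        assert (Pg : pw R G1) by (apply pw_filter; auto).
        rewrite EG in Pg. inversion Pg as [|? ? Hyz _]; subst.
        unfold G1 in Iy, Iz. apply filter_In in Iy as [Iy Ey]. apply filter_In in Iz as [Iz Ez].
        rewrite decP_true in Ey. rewrite decP_true in Ez.
        apply (Ht x y z); simpl; auto. apply Hyz; simpl; auto. }
      destruct (IH G2) as [H2 [Hinc [Hpw Hlen]]].
      * simpl in Hl. pose proof (filter_length_le (fun y => negb (decP (Eq x y))) l'). fold G2 in H. lia.
      * apply pw_filter; auto.
      * intros a b c Ia Ib Ic. unfold G2 in Ia, Ib, Ic. apply filter_In in Ia, Ib, Ic.
        apply (Ht a b c); simpl; tauto.
      * exists (x :: H2). split; [|split].
        -- intros y [<-|Hy]; simpl; auto. right. apply Hinc in Hy. unfold G2 in Hy. apply filter_In in Hy; tauto.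
        -- constructor; auto. intros y Hy. apply Hinc in Hy. unfold G2 in Hy. apply filter_In in Hy as [Hy Ey].
           split; [apply Hx; auto|]. intro E. apply decP_true in E. rewrite E in Ey. discriminate.
        -- simpl. lia.
Qed.

Definition RelC (e f : edge) := forall x, e_curve e x -> e_curve f x -> is_endpoint e x /\ is_endpoint f x.
Definition Rel (simple : bool) (e f : edge) := RelC e f /\ (simple = true -> ~ same_endpoints e f).

Lemma same_sym e f : same_endpoints e f -> same_endpoints f e.
Proof. unfold same_endpoints. intros [[]|[]]; [left|right]; split; auto. Qed.

Lemma Rel_sym s e f : Rel s e f -> Rel s f e.
Proof. intros [H1 H2]. split. - intros x Hx Hy. destruct (H1 x Hy Hx); auto. - intros Hs Hsame. apply (H2 Hs). apply same_sym; auto. Qed.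

Lemma emb_pw ok simple P G : embedded_graph ok simple P G <->
  NoDup P /\ (forall e, In e G -> In (e_src e) P /\ In (e_dst e) P /\ ok e) /\
  (forall e v, In e G -> In v P -> e_curve e v -> is_endpoint e v) /\ pw (Rel simple) G.
Proof.
  unfold embedded_graph. rewrite <- (nth_pw (Rel simple) dummy_edge G (Rel_sym simple)).
  unfold Rel, RelC. tauto.
Qed.

Lemma seg_sym p q x : seg p q x -> seg q p x.
Proof. intros [t [Ht ->]]. exists (1 - t). split; [lra|]. destruct p, q; pt_simpl; f_equal; ring. Qed.

Lemma seg_col a c x : seg a c x -> cross (psub c a) (psub x a) = 0.
Proof. intros [t [Ht ->]]. destruct a, c; pt_simpl; ring. Qed.

Lemma seg_shared P p q r x : general_position P -> In p P -> In q P -> In r P ->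
  p <> q -> p <> r -> q <> r -> seg p q x -> seg p r x -> x = p.
Proof.
  intros GP Hp Hq Hr H1 H2 H3 [t [Ht Ex]] [t' [Ht' Ey]].
  pose proof (GP p q r Hp Hq Hr H1 H3 H2) as Hc. unfold collinear in Hc.
  assert (t = 0 \/ cross (psub q p) (psub r p) = 0).
  { rewrite Ex in Ey. destruct p as [p1 p2], q as [q1 q2], r as [r1 r2]. unfold padd, pscale, psub in Ey.
    cbn [fst snd] in Ey. injection Ey; intros E2 E1. pt_simpl.
    destruct (Req_dec t 0); [left; auto| right].
    assert (t * ((q1 - p1) * (r2 - p2) - (q2 - p2) * (r1 - p1)) = 0).
    { assert (t * (q1 - p1) = t' * (r1 - p1)) by lra. assert (t * (q2 - p2) = t' * (r2 - p2)) by lra.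
      transitivity ((t * (q1 - p1)) * (r2 - p2) - (t * (q2 - p2)) * (r1 - p1)); [ring|]. rewrite H0, H4. ring. }
    apply Rmult_integral in H0. destruct H0; [contradiction|auto]. }
  destruct H as [->|H]; [|contradiction]. rewrite Ex. destruct p, q; pt_simpl; f_equal; ring.
Qed.

Lemma seg_pair_cases P a c b d : general_position P ->
  In a P -> In c P -> In b P -> In d P -> a <> c -> b <> d ->
  ~ ((a = b /\ c = d) \/ (a = d /\ c = b)) ->
  ((a <> b /\ a <> d /\ c <> b /\ c <> d) -> forall x, seg a c x -> seg b d x -> False) ->
  forall x, seg a c x -> seg b d x -> (x = a \/ x = c) /\ (x = b \/ x = d).
Proof.
  intros GP Ha Hc Hb Hd Hac Hbd Hns H4 x Hx Hy.
  destruct (classic (a = b)) as [Eab|Nab].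
  { subst b. assert (c <> d) by tauto. pose proof (seg_shared P a c d x GP Ha Hc Hd Hac Hbd H Hx Hy). subst; auto. }
  destruct (classic (a = d)) as [Ead|Nad].
  { subst d. assert (c <> b) by tauto.
    pose proof (seg_shared P a c b x GP Ha Hc Hb Hac (not_eq_sym Hbd) H Hx (seg_sym _ _ _ Hy)). subst; auto. }
  destruct (classic (c = b)) as [Ecb|Ncb].
  { subst b. pose proof (seg_shared P c a d x GP Hc Ha Hd (not_eq_sym Hac) Hbd Nad (seg_sym _ _ _ Hx) Hy). subst; auto. }
  destruct (classic (c = d)) as [Ecd|Ncd].
  { subst d. pose proof (seg_shared P c a b x GP Hc Ha Hb (not_eq_sym Hac) (not_eq_sym Hbd) Nab (seg_sym _ _ _ Hx) (seg_sym _ _ _ Hy)). subst; auto. }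
  exfalso. apply (H4 (conj Nab (conj Nad (conj Ncb Ncd))) x Hx Hy).
Qed.

Definition straighten (e : edge) : edge := mkEdge (e_src e) (e_dst e) (seg (e_src e) (e_dst e)).

Lemma straight_bound P m k (ok : edge -> Prop) (H : list edge) :
  general_position P -> NoDup P -> Good P k -> 0 < k -> M_is P m ->
  (forall e, ok e -> nice k e /\ e_src e <> e_dst e) ->
  (forall e, In e H -> In (e_src e) P /\ In (e_dst e) P /\ ok e) ->
  pw (fun e f => RelC e f /\ ~ same_endpoints e f) H ->
  (length H <= m)%nat.
Proof.
  intros GP ND Gd Hk [_ HM] Hok HH Hpw.
  rewrite <- (length_map straighten H). apply HM. apply emb_pw.
  split; [auto|split; [|split]].
  - intros e He. apply in_map_iff in He as [f [<- Hf]]. destruct (HH f Hf) as [? [? Hf']].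
    unfold straighten, straight_edge; simpl. split; [auto|split; [auto|]]. split; [apply Hok; auto| intros; tauto].
  - intros e v He Hv Hc. apply in_map_iff in He as [f [<- Hf]]. destruct (HH f Hf) as [Ha [Hc' Hf']].
    unfold straighten, is_endpoint in *; simpl in *.
    destruct (classic (v = e_src f)); [left; auto|]. destruct (classic (v = e_dst f)); [right; auto|].
    exfalso. apply (GP (e_src f) (e_dst f) v); auto. apply Hok; auto. apply seg_col; auto.
  - apply (pw_map _ _ straighten H Hpw). intros e f He Hf [HR Hns].
    destruct (HH e He) as [Ha [Hc He']]. destruct (HH f Hf) as [Hb [Hd Hf']].
    destruct (Hok e He') as [Ne Se]. destruct (Hok f Hf') as [Nf Sf].
    split.
    + intros x Hx Hy. unfold straighten, is_endpoint in *; simpl in *.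
      destruct (seg_pair_cases P (e_src e) (e_dst e) (e_src f) (e_dst f) GP Ha Hc Hb Hd Se Sf)
        with (x := x) as [X1 X2]; auto.
      intros [N1 [N2 [N3 N4]]] y Hy1 Hy2.
      destruct (curves_cross P k e f GP Gd Hk Ne Nf Ha Hc Hb Hd Se N1 N2 N3 N4 Sf) as [z [Hz1 Hz2]].
      { exists y; auto. }
      destruct (HR z Hz1 Hz2) as [[E1|E1] [E2|E2]]; rewrite E1 in E2; auto.
    + intros _ Hs. apply Hns. unfold straighten, same_endpoints in *; simpl in *. auto.
Qed.

Definition bpt (a c : pt) (sg lam : R) : pt :=
  (fst a + (fst c - fst a)/2 - sg * lam * (snd c - snd a), snd a + (snd c - snd a)/2 + sg * lam * (fst c - fst a)).

Lemma bpt_rev a c sg lam : bpt c a sg lam = bpt a c (- sg) lam.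
Proof. unfold bpt; destruct a, c; cbn [fst snd]; f_equal; field. Qed.

Lemma bpt_cross a c sg lam : cross (psub c a) (psub (bpt a c sg lam) a) = sg * lam * n2 (psub c a).
Proof. unfold bpt, n2; destruct a, c; pt_simpl; field. Qed.

Lemma arc_mid a c o s th : (s = 1 \/ s = -1) -> 0 < th < PI/2 ->
  c = padd o (rot (s * (2 * th)) (psub a o)) ->
  padd o (rot (s * th) (psub a o)) = bpt a c (- s) (sin th / (2 * (1 + cos th))).
Proof.
  intros Hs Hth Hc.
  assert (Ho := arc_center a c o s th Hs ltac:(lra) Hc).
  assert (Sth : 0 < sin th) by (apply sin_gt_0; lra).
  assert (Cth : 0 < cos th) by (apply cos_gt_0; lra).
  pose proof (sin2_cos2 th) as SC. unfold Rsqr in SC.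
  rewrite Ho. unfold rot, arc_ctr, bpt. rewrite sgn_cos, sgn_sin by auto.
  set (St := sin th) in *. set (Ct := cos th) in *. clearbody St Ct.
  destruct a as [a1 a2], c as [c1 c2]. pt_simpl.
  destruct Hs as [-> | ->]; f_equal; field_simplify_eq; try lra. all: replace (Ct^3) with (Ct*1 - Ct*St^2) by (rewrite <- SC; ring); ring.
Qed.

Lemma arc_mid_curve alpha e : 0 < PI - alpha < PI/2 -> arc_edge alpha e ->
  exists sg, (sg = 1 \/ sg = -1) /\
    e_curve e (bpt (e_src e) (e_dst e) sg (sin (PI - alpha) / (2 * (1 + cos (PI - alpha))))).
Proof.
  intros Hth [Hne [o [s [Hs [Hdst Hcur]]]]]. exists (- s). split; [destruct Hs; subst; [right|left]; ring|].
  rewrite <- (arc_mid (e_src e) (e_dst e) o s (PI - alpha)); auto.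
  apply Hcur. exists (PI - alpha). split; [lra|auto].
Qed.

Lemma bpt_not_end a c sg lam : a <> c -> 0 < lam -> (sg = 1 \/ sg = -1) ->
  bpt a c sg lam <> a /\ bpt a c sg lam <> c.
Proof.
  intros Hne Hl Hs.
  assert (Hn : 0 < n2 (psub c a)).
  { destruct (Req_dec (n2 (psub c a)) 0) as [E|E]; [|pose proof (n2_nonneg (psub c a)); lra].
    exfalso. apply Hne. unfold n2 in E. destruct a, c; pt_simpl. destruct (sumsq0 _ _ E). f_equal; lra. }
  pose proof (bpt_cross a c sg lam) as E.
  assert (sg * lam * n2 (psub c a) <> 0) by (destruct Hs; subst; nra).
  split; intro Eq; rewrite Eq in E; apply H; rewrite <- E; destruct a, c; pt_simpl; ring.
Qed.

Lemma triple_bpt (ok : edge -> Prop) (lam : R) : 0 < lam ->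
  (forall e, ok e -> e_src e <> e_dst e /\ exists sg, (sg = 1 \/ sg = -1) /\ e_curve e (bpt (e_src e) (e_dst e) sg lam)) ->
  forall e1 e2 e3, ok e1 -> ok e2 -> ok e3 -> RelC e1 e2 -> RelC e1 e3 -> RelC e2 e3 ->
  same_endpoints e1 e2 -> same_endpoints e1 e3 -> False.
Proof.
  intros Hl Hok e1 e2 e3 O1 O2 O3 R12 R13 R23 S12 S13.
  set (a := e_src e1). set (c := e_dst e1).
  assert (Hne : a <> c) by (apply Hok; auto).
  assert (Mid : forall e, ok e -> same_endpoints e1 e -> exists sg, (sg = 1 \/ sg = -1) /\ e_curve e (bpt a c sg lam)).
  { intros e Oe [[E1 E2]|[E1 E2]]; destruct (Hok e Oe) as [_ [sg [Hsg Hc]]].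
    - exists sg; split; auto. unfold a, c; rewrite E1, E2; auto.
    - exists (- sg); split; [destruct Hsg; subst; [right|left]; ring|]. unfold a, c; rewrite E1, E2, <- bpt_rev; auto. }
  assert (S11 : same_endpoints e1 e1) by (left; auto).
  destruct (Mid e1 O1 S11) as [s1 [H1 C1]]. destruct (Mid e2 O2 S12) as [s2 [H2 C2]].
  destruct (Mid e3 O3 S13) as [s3 [H3 C3]].
  assert (End : forall e, same_endpoints e1 e -> forall sg, (sg = 1 \/ sg = -1) -> ~ is_endpoint e (bpt a c sg lam)).
  { intros e Se sg Hsg He. destruct (bpt_not_end a c sg lam Hne Hl Hsg) as [N1 N2].
    destruct Se as [[E1 E2]|[E1 E2]]; destruct He as [He|He]; fold a c in E1, E2;
      [rewrite <- E1 in He| rewrite <- E2 in He| rewrite <- E2 in He| rewrite <- E1 in He]; auto. }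
  destruct (Req_dec s1 s2) as [E|E].
  { subst s2. destruct (R12 _ C1 C2). apply (End e1 S11 s1 H1); auto. }
  destruct (Req_dec s1 s3) as [E'|E'].
  { subst s3. destruct (R13 _ C1 C3). apply (End e1 S11 s1 H1); auto. }
  assert (s2 = s3) by (destruct H1, H2, H3; subst; lra). subst s3.
  destruct (R23 _ C2 C3). apply (End e2 S12 s2 H2); auto.
Qed.

Definition bend_data (Ct : R) (a c m : pt) (e : edge) : Prop :=
  (forall x, seg a m x \/ seg m c x -> e_curve e x) /\ ~ collinear a m c /\
  dot (psub a m) (psub c m) = - Ct * (pnorm (psub a m) * pnorm (psub c m)).

Lemma col_rev a m c : collinear a m c -> collinear c m a.
Proof. unfold collinear. destruct a, m, c; pt_simpl. intros H. nra. Qed.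

Lemma bend_data_of alpha e a c : 0 < PI - alpha < PI/2 -> bend_edge alpha e ->
  ((e_src e = a /\ e_dst e = c) \/ (e_src e = c /\ e_dst e = a)) ->
  exists m, bend_data (cos (PI - alpha)) a c m e.
Proof.
  intros Hth [m [Hn [Ha Hc]]] Hs. exists m.
  assert (Ecos : cos alpha = - cos (PI - alpha)) by (rewrite Rtrigo_facts.cos_pi_minus; ring).
  pose proof (angle_dot _ _ _ _ Hn Ha) as HD. rewrite Ecos in HD.
  destruct Hs as [[E1 E2]|[E1 E2]]; rewrite E1, E2 in *.
  - split; [intros x Hx; apply Hc; auto| split; auto].
  - split; [|split].
    + intros x [Hx|Hx]; apply Hc; [right|left]; apply seg_sym; auto.
    + intro H; apply Hn. apply col_rev; auto.
    + unfold dot in *. rewrite Rmult_comm with (r1 := pnorm (psub a m)). lra.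
Qed.

Lemma bend_circle (a c m : pt) (St Ct : R) :
  0 < St -> 0 < Ct -> St * St + Ct * Ct = 1 -> a <> c ->
  dot (psub a m) (psub c m) = - Ct * (pnorm (psub a m) * pnorm (psub c m)) ->
  let U := n2 (psub c a) in let D := dot (psub c a) (psub m a) in let C := cross (psub c a) (psub m a) in
  D * D - U * D + C * C + Ct / St * U * Rabs C = 0.
Proof.
  intros HS HC SC Hne HD U D C.
  set (Na := pnorm (psub a m)) in *. set (Nc := pnorm (psub c m)) in *.
  assert (Ha : Na * Na = n2 (psub a m)) by apply pnorm_sq.
  assert (Hc : Nc * Nc = n2 (psub c m)) by apply pnorm_sq.
  assert (Na0 : 0 <= Na) by (unfold Na, pnorm; apply sqrt_pos).
  assert (Nc0 : 0 <= Nc) by (unfold Nc, pnorm; apply sqrt_pos).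
  set (E := D * D - U * D + C * C).
  assert (HU : 0 < U).
  { unfold U. destruct (Req_dec (n2 (psub c a)) 0) as [E0|E0]; [|pose proof (n2_nonneg (psub c a)); lra].
    exfalso. apply Hne. unfold n2 in E0. destruct a, c; pt_simpl. destruct (sumsq0 _ _ E0). f_equal; lra. }
  assert (I1 : U * dot (psub a m) (psub c m) = E).
  { unfold E, U, D, C, n2. destruct a, c, m. pt_simpl. ring. }
  assert (I2 : U * U * (n2 (psub a m) * n2 (psub c m)) = E * E + U * U * (C * C)).
  { unfold E, U, D, C, n2. destruct a, c, m. pt_simpl. ring. }
  assert (EE : E = - Ct * U * (Na * Nc)) by (rewrite <- I1, HD; ring).
  assert (Eneg : E <= 0) by (rewrite EE; assert (0 <= U * (Na * Nc)) by (apply Rmult_le_pos; nra); nra).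
  assert (Q : E * E * (St * St) = (Ct * U * Rabs C) * (Ct * U * Rabs C)).
  { assert (E * E = Ct * Ct * (U * U * (n2 (psub a m) * n2 (psub c m)))) by (rewrite EE, <- Ha, <- Hc; ring).
    rewrite I2 in H. replace (St * St) with (1 - Ct * Ct) by lra.
    replace ((Ct * U * Rabs C) * (Ct * U * Rabs C)) with (Ct * Ct * (U * U) * (Rabs C * Rabs C)) by ring.
    rewrite <- Rabs_mult, Rabs_right by (apply Rle_ge; apply Rle_0_sqr). nra. }
  assert (- E * St = Ct * U * Rabs C).
  { assert (0 <= - E * St) by nra. assert (0 <= Ct * U * Rabs C) by (apply Rmult_le_pos; [nra| apply Rabs_pos]).
    apply Rsqr_inj; auto. unfold Rsqr. nra. }
  fold E. apply (Rmult_eq_reg_l St); [|lra]. replace (St * (E + Ct / St * U * Rabs C)) with (E * St + Ct * U * Rabs C) by (field; lra).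
  lra.
Qed.

Lemma circle_P1 U h x1 y1 x2 y2 : 0 < U -> 0 < h -> 0 < y1 -> 0 < y2 ->
  x1 * x1 - U * x1 + y1 * y1 + h * U * y1 = 0 -> x2 * x2 - U * x2 + y2 * y2 + h * U * y2 = 0 ->
  x1 < x2 -> 0 < x2 * y1 - y2 * x1.
Proof.
  intros HU Hh Hy1 Hy2 E1 E2 Hx.
  assert (F1 : x1 * (U - x1) = y1 * (y1 + h * U)) by lra.
  assert (F2 : x2 * (U - x2) = y2 * (y2 + h * U)) by lra.
  assert (0 < y1 * (y1 + h*U)) by (apply Rmult_lt_0_compat; nra).
  assert (0 < y2 * (y2 + h*U)) by (apply Rmult_lt_0_compat; nra).
  assert (0 < x1 /\ x1 < U) by (split; nra). assert (0 < x2 /\ x2 < U) by (split; nra).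
  destruct (Rlt_dec 0 (x2 * y1 - y2 * x1)) as [|h0]; auto. exfalso. apply Rnot_lt_le in h0.
  assert (y1 < y2) by nra.
  assert (K : x1 * x2 * ((U - x1) * (y2 + h * U) - (U - x2) * (y1 + h * U)) =
              (y1 + h * U) * (y2 + h * U) * (x2 * y1 - x1 * y2)).
  { transitivity (x2 * (x1 * (U - x1)) * (y2 + h*U) - x1 * (x2 * (U - x2)) * (y1 + h*U)); [ring|].
    rewrite F1, F2. ring. }
  assert ((U - x1) * (y2 + h * U) - (U - x2) * (y1 + h * U) <= 0).
  { assert (Hneg : (y1 + h * U) * (y2 + h * U) * (x2 * y1 - x1 * y2) <= 0).
    { assert (0 < (y1 + h * U) * (y2 + h * U)) by (apply Rmult_lt_0_compat; nra).
      assert (x2 * y1 - x1 * y2 <= 0) by lra. nra. }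
    rewrite <- K in Hneg. assert (0 < x1 * x2) by nra.
    destruct (Rle_dec ((U - x1) * (y2 + h * U) - (U - x2) * (y1 + h * U)) 0) as [|hh]; auto.
    apply Rnot_le_lt in hh. exfalso. assert (0 < x1 * x2 * ((U - x1) * (y2 + h * U) - (U - x2) * (y1 + h * U))) by (apply Rmult_lt_0_compat; auto). lra. }
  assert ((U - x2) * (y1 + h * U) < (U - x1) * (y2 + h * U)).
  { apply Rle_lt_trans with ((U - x2) * (y2 + h * U)).
    - apply Rmult_le_compat_l; lra.
    - apply Rmult_lt_compat_r; nra. }
  lra.
Qed.

Lemma circle_P2 U h x1 y1 x2 y2 : 0 < U -> 0 < h -> 0 < y1 -> 0 < y2 ->
  x1 * x1 - U * x1 + y1 * y1 + h * U * y1 = 0 -> x2 * x2 - U * x2 + y2 * y2 + h * U * y2 = 0 ->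
  x1 < x2 -> 0 < (U - x1) * (y2 - y1) + y1 * (x2 - x1).
Proof.
  intros HU Hh Hy1 Hy2 E1 E2 Hx.
  pose proof (circle_P1 U h (U - x2) y2 (U - x1) y1 HU Hh Hy2 Hy1) as P.
  assert (0 < (U - x1) * y2 - y1 * (U - x2)) by (apply P; [nra|nra|lra]).
  nra.
Qed.

Lemma circle_eqx U h x y1 y2 : 0 < U -> 0 < h -> 0 < y1 -> 0 < y2 ->
  x * x - U * x + y1 * y1 + h * U * y1 = 0 -> x * x - U * x + y2 * y2 + h * U * y2 = 0 -> y1 = y2.
Proof.
  intros HU Hh Hy1 Hy2 E1 E2.
  assert ((y1 - y2) * (y1 + y2 + h * U) = 0) by nra.
  apply Rmult_integral in H. destruct H; [lra|]. nra.
Qed.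

Lemma pt_of_DC a c m : n2 (psub c a) <> 0 ->
  m = (fst a + (dot (psub c a) (psub m a) * (fst c - fst a) - cross (psub c a) (psub m a) * (snd c - snd a)) / n2 (psub c a),
       snd a + (dot (psub c a) (psub m a) * (snd c - snd a) + cross (psub c a) (psub m a) * (fst c - fst a)) / n2 (psub c a)).
Proof.
  intros Hn. unfold n2 in *. destruct a, c, m. pt_simpl. f_equal; field; auto.
Qed.

Lemma cross_helper a c mA mB (St Ct : R) :
  0 < St -> 0 < Ct -> ~ collinear a mA c -> ~ collinear a mB c -> 0 < n2 (psub c a) ->
  let U := n2 (psub c a) in
  let DA := dot (psub c a) (psub mA a) in let CA := cross (psub c a) (psub mA a) in
  let DB := dot (psub c a) (psub mB a) in let CB := cross (psub c a) (psub mB a) in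
  DA * DA - U * DA + CA * CA + Ct / St * U * Rabs CA = 0 ->
  DB * DB - U * DB + CB * CB + Ct / St * U * Rabs CB = 0 ->
  0 < CA * CB -> DA < DB ->
  exists X, seg a mB X /\ seg mA c X /\ X <> a /\ X <> c.
Proof.
  intros HS HC NA NB HU U DA CA DB CB EA EB Hside Hlt.
  set (h := Ct / St) in *. assert (Hh : 0 < h) by (unfold h; apply Rdiv_lt_0_compat; auto).
  set (sg := if Rlt_dec 0 CA then 1 else -1).
  assert (Hsg : sg * sg = 1) by (unfold sg; destruct Rlt_dec; lra).
  assert (Hyy : 0 < sg * CA /\ 0 < sg * CB /\ Rabs CA = sg * CA /\ Rabs CB = sg * CB).
  { unfold sg; destruct (Rlt_dec 0 CA) as [h1|h1].
    - assert (0 < CB) by (apply Rmult_lt_reg_l with CA; lra).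
      rewrite !Rabs_right by lra. lra.
    - apply Rnot_lt_le in h1. assert (CA < 0) by (destruct h1; auto; subst; rewrite H in Hside; lra).
      assert (CB < 0) by nra. rewrite !Rabs_left by lra. lra. }
  destruct Hyy as [YA [YB [AA AB]]].
  set (yA := sg * CA) in *. set (yB := sg * CB) in *.
  rewrite AA in EA. rewrite AB in EB.
  assert (EA' : DA * DA - U * DA + yA * yA + h * U * yA = 0).
  { unfold yA in *. replace (sg * CA * (sg * CA)) with ((sg*sg) * (CA * CA)) by ring. rewrite Hsg. lra. }
  assert (EB' : DB * DB - U * DB + yB * yB + h * U * yB = 0).
  { unfold yB in *. replace (sg * CB * (sg * CB)) with ((sg*sg) * (CB * CB)) by ring. rewrite Hsg. lra. }
  pose proof (circle_P1 U h DA yA DB yB HU Hh YA YB EA' EB' Hlt) as P1.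
  pose proof (circle_P2 U h DA yA DB yB HU Hh YA YB EA' EB' Hlt) as P2.
  assert (I1 : U * cross (psub mB a) (psub mA a) = DB * CA - CB * DA).
  { unfold U, DB, CA, CB, DA, n2. destruct a, c, mA, mB. pt_simpl. ring. }
  assert (I2 : cross (psub mB a) (psub c a) = - CB).
  { unfold CB. destruct a, c, mB. pt_simpl. ring. }
  assert (I3 : cross (psub c mA) (psub a mA) = - CA).
  { unfold CA. destruct a, c, mA. pt_simpl. ring. }
  assert (I4 : U * cross (psub c mA) (psub mB mA) = (U - DA) * (CB - CA) + CA * (DB - DA)).
  { unfold U, DB, CA, CB, DA, n2. destruct a, c, mA, mB. pt_simpl. ring. }
  destruct (seg_cross_point a mB mA c) as [t [mu [Ht [Hmu E]]]].
  - apply (Rmult_lt_reg_l U); auto. rewrite Rmult_0_r.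
    replace (U * (cross (psub mB a) (psub mA a) * cross (psub mB a) (psub c a))) with
      ((U * cross (psub mB a) (psub mA a)) * cross (psub mB a) (psub c a)) by ring.
    rewrite I1, I2.
    assert (Q : (DB * yA - yB * DA) * yB = (DB*CA - CB*DA)*CB)
      by (unfold yA, yB; transitivity ((sg*sg)*((DB*CA - CB*DA)*CB)); [ring| rewrite Hsg; ring]).
    assert (0 < (DB * yA - yB * DA) * yB) by (apply Rmult_lt_0_compat; lra). lra.
  - apply (Rmult_lt_reg_l U); auto. rewrite Rmult_0_r.
    replace (U * (cross (psub c mA) (psub a mA) * cross (psub c mA) (psub mB mA))) with
      (cross (psub c mA) (psub a mA) * (U * cross (psub c mA) (psub mB mA))) by ring.
    rewrite I3, I4.
    assert (Q : yA * ((U - DA) * (yB - yA) + yA * (DB - DA)) = CA * ((U - DA) * (CB - CA) + CA * (DB - DA)))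
      by (unfold yA, yB; transitivity ((sg*sg)*(CA * ((U - DA) * (CB - CA) + CA * (DB - DA)))); [ring| rewrite Hsg; ring]).
    assert (0 < yA * ((U - DA) * (yB - yA) + yA * (DB - DA))) by (apply Rmult_lt_0_compat; lra). lra.
  - exists (padd a (pscale t (psub mB a))). split; [exists t; split; [lra|auto]|].
    split; [rewrite E; exists mu; split; [lra|auto]|]. split.
    + intro Ea. apply NA. unfold collinear. rewrite E in Ea. rewrite <- Ea.
      destruct mA, c; pt_simpl; ring.
    + intro Ec. apply NB. unfold collinear. rewrite <- Ec. destruct a, mB; pt_simpl; ring.
Qed.

Definition ends (e : edge) (a c : pt) := (e_src e = a /\ e_dst e = c) \/ (e_src e = c /\ e_dst e = a).

Lemma ends_end e a c x : ends e a c -> is_endpoint e x -> x = a \/ x = c.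
Proof. intros [[E1 E2]|[E1 E2]] [H|H]; rewrite ?E1, ?E2 in H; auto. Qed.

Lemma bend_pair St Ct a c m1 m2 e1 e2 : 0 < St -> 0 < Ct -> St * St + Ct * Ct = 1 -> a <> c ->
  ends e1 a c -> bend_data Ct a c m1 e1 -> bend_data Ct a c m2 e2 ->
  0 < cross (psub c a) (psub m1 a) * cross (psub c a) (psub m2 a) -> RelC e1 e2 -> False.
Proof.
  intros HS HC SC Hne En1 [Cu1 [N1 D1]] [Cu2 [N2 D2]] Hside HR.
  assert (HU : 0 < n2 (psub c a)).
  { destruct (Req_dec (n2 (psub c a)) 0) as [E0|E0]; [|pose proof (n2_nonneg (psub c a)); lra].
    exfalso. apply Hne. unfold n2 in E0. destruct a, c; pt_simpl. destruct (sumsq0 _ _ E0). f_equal; lra. }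
  pose proof (bend_circle a c m1 St Ct HS HC SC Hne D1) as E1. pose proof (bend_circle a c m2 St Ct HS HC SC Hne D2) as E2.
  cbv zeta in E1, E2.
  assert (NotEnd : forall X, X <> a -> X <> c -> e_curve e1 X -> e_curve e2 X -> False).
  { intros X Xa Xc H1 H2. destruct (HR X H1 H2) as [H _]. destruct (ends_end e1 a c X En1 H); auto. }
  destruct (Rtotal_order (dot (psub c a) (psub m1 a)) (dot (psub c a) (psub m2 a))) as [Hlt|[Heq|Hgt]].
  - destruct (cross_helper a c m1 m2 St Ct HS HC N1 N2 HU E1 E2 Hside Hlt) as [X [S2 [S1 [Xa Xc]]]].
    apply (NotEnd X Xa Xc); [apply Cu1; right| apply Cu2; left]; auto.
  - assert (HR1 : Rabs (cross (psub c a) (psub m1 a)) = Rabs (cross (psub c a) (psub m2 a))).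
    { apply (circle_eqx (n2 (psub c a)) (Ct / St) (dot (psub c a) (psub m1 a))).
      - auto.
      - apply Rdiv_lt_0_compat; auto.
      - apply Rabs_pos_lt. intro Z. rewrite Z in Hside. lra.
      - apply Rabs_pos_lt. intro Z. rewrite Z in Hside. lra.
      - rewrite <- (Rabs_mult), Rabs_right by (apply Rle_ge, Rle_0_sqr). exact E1.
      - rewrite Heq. rewrite <- (Rabs_mult), Rabs_right by (apply Rle_ge, Rle_0_sqr). exact E2. }
    assert (Ceq : cross (psub c a) (psub m1 a) = cross (psub c a) (psub m2 a)).
    { revert HR1 Hside. unfold Rabs. destruct Rcase_abs, Rcase_abs; intros; nra. }
    assert (m1 = m2).
    { rewrite (pt_of_DC a c m1), (pt_of_DC a c m2) by lra. rewrite Heq, Ceq. auto. }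
    subst m2. apply (NotEnd m1).
    + intro E. apply N1. rewrite E. unfold collinear. destruct a, c; pt_simpl; ring.
    + intro E. apply N1. rewrite E. unfold collinear. destruct a, c; pt_simpl; ring.
    + apply Cu1. left. exists 1. split; [lra|]. destruct a, m1; pt_simpl; f_equal; ring.
    + apply Cu2. left. exists 1. split; [lra|]. destruct a, m1; pt_simpl; f_equal; ring.
  - rewrite Rmult_comm in Hside.
    destruct (cross_helper a c m2 m1 St Ct HS HC N2 N1 HU E2 E1 Hside Hgt) as [X [S2 [S1 [Xa Xc]]]].
    apply (NotEnd X Xa Xc); [apply Cu1; left| apply Cu2; right]; auto.
Qed.

Lemma bend_triple alpha : 0 < PI - alpha < PI/2 ->
  forall e1 e2 e3, bend_edge alpha e1 -> bend_edge alpha e2 -> bend_edge alpha e3 ->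
  RelC e1 e2 -> RelC e1 e3 -> RelC e2 e3 -> same_endpoints e1 e2 -> same_endpoints e1 e3 -> False.
Proof.
  intros Hth e1 e2 e3 B1 B2 B3 R12 R13 R23 S12 S13.
  set (a := e_src e1). set (c := e_dst e1).
  assert (Hne : a <> c) by (destruct B1 as [m [Hn _]]; apply (ncol_ne3 _ m _ Hn)).
  assert (En1 : ends e1 a c) by (left; auto).
  assert (En : forall e, same_endpoints e1 e -> ends e a c).
  { intros e [[E1 E2]|[E1 E2]]; [left|right]; split; auto. }
  destruct (bend_data_of alpha e1 a c Hth B1 En1) as [m1 D1].
  destruct (bend_data_of alpha e2 a c Hth B2 (En e2 S12)) as [m2 D2].
  destruct (bend_data_of alpha e3 a c Hth B3 (En e3 S13)) as [m3 D3].
  set (th := PI - alpha) in *.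
  assert (Sth : 0 < sin th) by (apply sin_gt_0; lra).
  assert (Cth : 0 < cos th) by (apply cos_gt_0; lra).
  pose proof (sin2_cos2 th) as SC. unfold Rsqr in SC.
  assert (NZ : forall m e, bend_data (cos th) a c m e -> cross (psub c a) (psub m a) <> 0).
  { intros m e [_ [N _]] Z. apply N. unfold collinear. destruct a, c, m; pt_simpl. lra. }
  pose proof (NZ _ _ D1) as Z1. pose proof (NZ _ _ D2) as Z2. pose proof (NZ _ _ D3) as Z3.
  set (C1 := cross (psub c a) (psub m1 a)) in *. set (C2 := cross (psub c a) (psub m2 a)) in *.
  set (C3 := cross (psub c a) (psub m3 a)) in *.
  destruct (Rlt_dec 0 (C1 * C2)) as [P12|P12].
  { apply (bend_pair (sin th) (cos th) a c m1 m2 e1 e2); auto. }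
  destruct (Rlt_dec 0 (C1 * C3)) as [P13|P13].
  { apply (bend_pair (sin th) (cos th) a c m1 m3 e1 e3); auto. }
  assert (P23 : 0 < C2 * C3).
  { apply Rnot_lt_le in P12. apply Rnot_lt_le in P13.
    assert (C1 * C2 < 0) by (destruct P12 as [hh|hh]; auto; exfalso; apply Rmult_integral in hh; tauto).
    assert (C1 * C3 < 0) by (destruct P13 as [hh|hh]; auto; exfalso; apply Rmult_integral in hh; tauto).
    assert (0 < (C1 * C2) * (C1 * C3)) by nra.
    assert (0 < C1 * C1) by nra.
    replace ((C1 * C2) * (C1 * C3)) with ((C1 * C1) * (C2 * C3)) in H1 by ring.
    apply Rmult_lt_reg_l with (C1 * C1); lra. }
  apply (bend_pair (sin th) (cos th) a c m2 m3 e2 e3); auto.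
Qed.

Lemma arc_ctr_ok a c s th : (s = 1 \/ s = -1) -> 0 < th < PI ->
  c = padd (arc_ctr a c s (cos th / sin th)) (rot (s * (2 * th)) (psub a (arc_ctr a c s (cos th / sin th)))).
Proof.
  intros Hs Hth.
  assert (Sth : 0 < sin th) by (apply sin_gt_0; lra).
  pose proof (sin2_cos2 th) as SC. unfold Rsqr in SC.
  unfold rot, arc_ctr. rewrite sgn_cos, sgn_sin by auto. rewrite cos_2a_sin, sin_2a.
  set (St := sin th) in *. set (Ct := cos th) in *. clearbody St Ct.
  destruct a as [a1 a2], c as [c1 c2]. pt_simpl.
  destruct Hs as [-> | ->]; f_equal; field_simplify_eq; try lra.
  all: replace (St^3) with (St*1 - St*Ct^2) by (rewrite <- SC; ring); ring.
Qed.

Lemma arc_side_formula (o v : pt) (s th tau : R) : (s = 1 \/ s = -1) ->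
  - s * cross (psub (padd o (rot (s * (2*th)) v)) (padd o v)) (psub (padd o (rot (s * (2*tau)) v)) (padd o v))
  = 4 * sin th * sin tau * n2 v * sin (th - tau).
Proof.
  intros Hs. rewrite sin_minus. unfold rot, n2.
  rewrite (sgn_cos s (2*th)), (sgn_cos s (2*tau)), (sgn_sin s (2*th)), (sgn_sin s (2*tau)) by auto.
  rewrite !cos_2a_sin, !sin_2a.
  destruct o, v. pt_simpl. destruct Hs as [-> | ->]; ring.
Qed.

Lemma arc_side o v s th t : (s = 1 \/ s = -1) -> 0 < th < PI/2 -> 0 <= t <= 2 * th -> 0 < n2 v ->
  let a := padd o v in let c := padd o (rot (s * (2*th)) v) in let x := padd o (rot (s * t) v) in
  0 <= - s * cross (psub c a) (psub x a) /\ (cross (psub c a) (psub x a) = 0 -> x = a \/ x = c).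
Proof.
  intros Hs Hth Ht HN a c x.
  assert (Ex : x = padd o (rot (s * (2 * (t/2))) v)) by (unfold x; f_equal; f_equal; field).
  pose proof (arc_side_formula o v s th (t/2) Hs) as F. fold a c in F. rewrite <- Ex in F.
  assert (Sth : 0 < sin th) by (apply sin_gt_0; lra).
  assert (S1 : 0 <= sin (t/2)) by (apply sin_ge_0; lra).
  assert (S2 : 0 <= sin (th - t/2)) by (apply sin_ge_0; lra).
  split.
  - rewrite F. repeat apply Rmult_le_pos; lra.
  - intros Z. rewrite Z in F. rewrite Rmult_0_r in F.
    assert (sin (t/2) = 0 \/ sin (th - t/2) = 0).
    { destruct (Req_dec (sin (t/2)) 0); auto. right.
      apply (Rmult_eq_reg_l (4 * sin th * sin (t/2) * n2 v)); [lra|].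
      apply Rmult_integral_contrapositive; split; [|lra]. apply Rmult_integral_contrapositive; split; lra. }
    destruct H as [H|H].
    + left. destruct (Req_dec t 0) as [->|Ht0].
      * unfold x, a. rewrite Rmult_0_r, rot_0; auto.
      * exfalso. assert (0 < sin (t/2)) by (apply sin_gt_0; lra). lra.
    + right. destruct (Req_dec t (2*th)) as [->|Ht0].
      * auto.
      * exfalso. assert (0 < sin (th - t/2)) by (apply sin_gt_0; lra). lra.
Qed.

Definition mkArc (alpha sg : R) (e : edge) : edge :=
  mkEdge (e_src e) (e_dst e)
    (fun x => exists t, 0 <= t <= 2 * (PI - alpha) /\
       x = padd (arc_ctr (e_src e) (e_dst e) (- sg) (cos (PI - alpha) / sin (PI - alpha)))
             (rot ((- sg) * t) (psub (e_src e) (arc_ctr (e_src e) (e_dst e) (- sg) (cos (PI - alpha) / sin (PI - alpha)))))).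

Lemma mkArc_props alpha sg e : 0 < PI - alpha < PI/2 -> (sg = 1 \/ sg = -1) -> e_src e <> e_dst e ->
  arc_edge alpha (mkArc alpha sg e) /\ e_src (mkArc alpha sg e) = e_src e /\ e_dst (mkArc alpha sg e) = e_dst e /\
  forall x, e_curve (mkArc alpha sg e) x ->
    0 <= sg * cross (psub (e_dst e) (e_src e)) (psub x (e_src e)) /\
    (cross (psub (e_dst e) (e_src e)) (psub x (e_src e)) = 0 -> x = e_src e \/ x = e_dst e).
Proof.
  intros Hth Hsg Hne.
  set (a := e_src e) in *. set (c := e_dst e) in *.
  set (o := arc_ctr a c (- sg) (cos (PI - alpha) / sin (PI - alpha))).
  assert (Hs : - sg = 1 \/ - sg = -1) by (destruct Hsg; subst; [right|left]; ring).
  assert (Hc : c = padd o (rot (- sg * (2 * (PI - alpha))) (psub a o))) by (apply arc_ctr_ok; auto; lra).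
  set (v := psub a o) in *.
  assert (Ea : a = padd o v) by (unfold v; rewrite padd_psub; auto).
  split; [|split; [auto|split; [auto|]]].
  - split; [simpl; auto|]. exists o, (- sg). split; auto. split; [simpl; auto|]. intros x; simpl. fold a c o v. tauto.
  - intros x [t [Ht Ex]]. simpl in Ex. fold a c o v in Ex.
    assert (HN : 0 < n2 v).
    { destruct (Req_dec (n2 v) 0) as [E|E]; [|pose proof (n2_nonneg v); lra]. exfalso. apply Hne.
      fold a c. rewrite Hc, Ea. assert (v = (0,0)).
      { unfold n2 in E. destruct v as [v1 v2]. pt_simpl. destruct (sumsq0 _ _ E). subst; auto. }
      rewrite H. unfold rot; cbn [fst snd]. f_equal. f_equal; ring. }
    pose proof (arc_side o v (- sg) (PI - alpha) t Hs Hth Ht HN) as [S1 S2].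
    cbv zeta in S1, S2. rewrite <- Ea, <- Hc, <- Ex in S1, S2.
    split; [replace sg with (- - sg) by ring; lra|]. auto.
Qed.

Definition blam (alpha : R) := sin (PI - alpha) / (2 * (1 + cos (PI - alpha))).

Definition mkBend (alpha sg : R) (e : edge) : edge :=
  mkEdge (e_src e) (e_dst e)
    (fun x => seg (e_src e) (bpt (e_src e) (e_dst e) sg (blam alpha)) x \/
              seg (bpt (e_src e) (e_dst e) sg (blam alpha)) (e_dst e) x).

Lemma bend_angle a c sg alpha : 0 < PI - alpha < PI/2 -> (sg = 1 \/ sg = -1) -> a <> c ->
  angle_at a (bpt a c sg (blam alpha)) c = alpha.
Proof.
  intros Hth Hsg Hne. unfold angle_at.
  set (th := PI - alpha) in *.
  assert (Sth : 0 < sin th) by (apply sin_gt_0; lra).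
  assert (Cth : 0 < cos th) by (apply cos_gt_0; lra).
  pose proof (sin2_cos2 th) as SC. unfold Rsqr in SC.
  set (lam := blam alpha). assert (El : lam = sin th / (2 * (1 + cos th))) by auto.
  set (m := bpt a c sg lam).
  assert (HU : 0 < n2 (psub c a)).
  { destruct (Req_dec (n2 (psub c a)) 0) as [E0|E0]; [|pose proof (n2_nonneg (psub c a)); lra].
    exfalso. apply Hne. unfold n2 in E0. destruct a, c; pt_simpl. destruct (sumsq0 _ _ E0). f_equal; lra. }
  set (U := n2 (psub c a)) in *.
  assert (Hs2 : sg * sg = 1) by (destruct Hsg; subst; ring).
  assert (N1 : n2 (psub a m) = U * (/4 + lam * lam)).
  { unfold m, bpt, U, n2. destruct a, c. pt_simpl. 
    transitivity ((r1 - r) * (r1 - r) / 4 + (r2 - r0) * (r2 - r0) / 4 + (sg*sg) * lam * lam * ((r1 - r) * (r1 - r) + (r2 - r0) * (r2 - r0))); [field| rewrite Hs2; field]. }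
  assert (N2 : n2 (psub c m) = U * (/4 + lam * lam)).
  { unfold m, bpt, U, n2. destruct a, c. pt_simpl. 
    transitivity ((r1 - r) * (r1 - r) / 4 + (r2 - r0) * (r2 - r0) / 4 + (sg*sg) * lam * lam * ((r1 - r) * (r1 - r) + (r2 - r0) * (r2 - r0))); [field| rewrite Hs2; field]. }
  assert (DD : dot (psub a m) (psub c m) = U * (lam * lam - /4)).
  { unfold m, bpt, U, n2. destruct a, c. pt_simpl. 
    transitivity (- ((r1 - r) * (r1 - r) / 4 + (r2 - r0) * (r2 - r0) / 4) + (sg*sg) * lam * lam * ((r1 - r) * (r1 - r) + (r2 - r0) * (r2 - r0))); [field| rewrite Hs2; field]. }
  assert (PP : pnorm (psub a m) * pnorm (psub c m) = U * (/4 + lam * lam)).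
  { unfold pnorm. fold (n2 (psub a m)) (n2 (psub c m)). rewrite N1, N2. apply sqrt_sqrt.
    apply Rmult_le_pos; [lra|]. pose proof (Rle_0_sqr lam); unfold Rsqr in *; lra. }
  rewrite DD, PP.
  assert (Hl : 0 <= lam * lam) by (pose proof (Rle_0_sqr lam); unfold Rsqr in *; lra).
  replace (U * (lam * lam - / 4) / (U * (/ 4 + lam * lam))) with (cos alpha).
  - apply acos_cos. unfold th in Hth. pose proof PI_RGT_0. lra.
  - replace alpha with (PI - th) by (unfold th; ring). rewrite Rtrigo_facts.cos_pi_minus.
    rewrite El. field_simplify_eq; [| split; [lra|]; nra].
    replace (sin th ^ 2) with (1 - cos th ^ 2) by (simpl; lra). ring.
Qed.

Lemma mkBend_props alpha sg e : 0 < PI - alpha < PI/2 -> (sg = 1 \/ sg = -1) -> e_src e <> e_dst e ->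
  bend_edge alpha (mkBend alpha sg e) /\ e_src (mkBend alpha sg e) = e_src e /\ e_dst (mkBend alpha sg e) = e_dst e /\
  forall x, e_curve (mkBend alpha sg e) x ->
    0 <= sg * cross (psub (e_dst e) (e_src e)) (psub x (e_src e)) /\
    (cross (psub (e_dst e) (e_src e)) (psub x (e_src e)) = 0 -> x = e_src e \/ x = e_dst e).
Proof.
  intros Hth Hsg Hne.
  set (a := e_src e) in *. set (c := e_dst e) in *.
  assert (Sth : 0 < sin (PI - alpha)) by (apply sin_gt_0; lra).
  assert (Cth : 0 < cos (PI - alpha)) by (apply cos_gt_0; lra).
  assert (Hl : 0 < blam alpha) by (unfold blam; apply Rdiv_lt_0_compat; lra).
  set (lam := blam alpha) in *. set (m := bpt a c sg lam).
  assert (HU : 0 < n2 (psub c a)).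
  { destruct (Req_dec (n2 (psub c a)) 0) as [E0|E0]; [|pose proof (n2_nonneg (psub c a)); lra].
    exfalso. apply Hne. unfold n2 in E0. destruct a, c; pt_simpl. destruct (sumsq0 _ _ E0). f_equal; lra. }
  assert (Hs2 : sg * sg = 1) by (destruct Hsg; subst; ring).
  pose proof (bpt_cross a c sg lam) as BC. fold m in BC.
  assert (NZ : sg * lam * n2 (psub c a) <> 0) by (destruct Hsg; subst; nra).
  split; [|split; [auto|split; [auto|]]].
  - exists m. split; [|split].
    + intro Hc. unfold collinear in Hc. cbn [e_src e_dst mkBend] in Hc. fold a c m in Hc. apply NZ. rewrite <- BC. replace (cross (psub c a) (psub m a)) with (- cross (psub m a) (psub c a)) by (destruct (psub c a), (psub m a); unfold cross; cbn [fst snd]; ring). rewrite Hc; ring.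
    + apply bend_angle; auto.
    + intros x. simpl. fold a c lam m. tauto.
  - intros x Hx. simpl in Hx. fold a c lam m in Hx. destruct Hx as [[t [Ht Ex]]|[t [Ht Ex]]].
    + assert (E : cross (psub c a) (psub x a) = t * (sg * lam * n2 (psub c a))).
      { rewrite <- BC, Ex. destruct a, c, m; pt_simpl; ring. }
      rewrite E. split.
      * replace (sg * (t * (sg * lam * n2 (psub c a)))) with ((sg*sg) * t * lam * n2 (psub c a)) by ring.
        rewrite Hs2. apply Rmult_le_pos; [|lra]. apply Rmult_le_pos; [|lra]. lra.
      * intros Z. left. apply Rmult_integral in Z. destruct Z as [Z|Z]; [|contradiction].
        rewrite Ex, Z. destruct a, m; pt_simpl; f_equal; ring.
    + assert (E : cross (psub c a) (psub x a) = (1 - t) * (sg * lam * n2 (psub c a))).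
      { rewrite <- BC, Ex. destruct a, c, m; pt_simpl; ring. }
      rewrite E. split.
      * replace (sg * ((1 - t) * (sg * lam * n2 (psub c a)))) with ((sg*sg) * (1 - t) * lam * n2 (psub c a)) by ring.
        rewrite Hs2. apply Rmult_le_pos; [|lra]. apply Rmult_le_pos; [|lra]. lra.
      * intros Z. right. apply Rmult_integral in Z. destruct Z as [Z|Z]; [|contradiction].
        rewrite Ex. replace t with 1 by lra. destruct c, m; pt_simpl; f_equal; ring.
Qed.

Lemma diamond_RelC P k (e' f' : edge) : Good P k -> 0 < k ->
  In (e_src e') P -> In (e_dst e') P -> In (e_src f') P -> In (e_dst f') P ->
  e_src e' <> e_dst e' -> e_src f' <> e_dst f' ->
  ~ (e_src e' = e_src f' /\ e_dst e' = e_dst f') -> ~ (e_src e' = e_dst f' /\ e_dst e' = e_src f') ->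
  ((e_src e' <> e_src f' /\ e_src e' <> e_dst f' /\ e_dst e' <> e_src f' /\ e_dst e' <> e_dst f') ->
     forall y, seg (e_src e') (e_dst e') y -> ~ seg (e_src f') (e_dst f') y) ->
  (forall x, e_curve e' x -> Dm k (e_src e') (e_dst e') x) ->
  (forall x, e_curve f' x -> Dm k (e_src f') (e_dst f') x) ->
  RelC e' f'.
Proof.
  intros [GV [GS1 [GS2 GX]]] Hk Ha Hc Hb Hd Hac Hbd N1 N2 Hdis De Df x Hx Hy.
  specialize (De x Hx) as [Da Dc]. specialize (Df x Hy) as [Db Dd].
  set (a := e_src e') in *. set (c := e_dst e') in *. set (b := e_src f') in *. set (d := e_dst f') in *.
  unfold is_endpoint. fold a c b d.
  destruct (classic (a = b)) as [Eab|Nab].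
  { assert (c <> d) by (intro; apply N1; auto). rewrite <- Eab in Db.
    assert (x = a) by (apply (GS1 a c d x); auto; rewrite Eab; auto). split; left; congruence. }
  destruct (classic (a = d)) as [Ead|Nad].
  { assert (c <> b) by (intro; apply N2; auto). rewrite <- Ead in Dd.
    assert (x = a) by (apply (GS1 a c b x); auto; intro E; apply Hbd; congruence). split; [left|right]; congruence. }
  destruct (classic (c = b)) as [Ecb|Ncb].
  { rewrite <- Ecb in Db.
    assert (x = c) by (apply (GS1 c a d x); auto; intro E; apply Hbd; congruence). split; [right|left]; congruence. }
  destruct (classic (c = d)) as [Ecd|Ncd].
  { rewrite <- Ecd in Dd.
    assert (x = c) by (apply (GS1 c a b x); auto; intro E; apply Hbd; congruence). split; right; congruence. }
  exfalso. apply (GS2 a c b d x Ha Hc Hb Hd Hac Nab Nad Ncb Ncd Hbd).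
  - intros y Hy1 Hy2. apply (Hdis (conj Nab (conj Nad (conj Ncb Ncd))) y); auto.
  - split; auto.
  - split; auto.
Qed.

Lemma lower_generic P k (ok : edge -> Prop) (mk : R -> edge -> edge) G0 :
  Good P k -> 0 < k -> embedded_graph straight_edge true P G0 ->
  (forall e sg, (sg = 1 \/ sg = -1) -> e_src e <> e_dst e ->
     ok (mk sg e) /\ e_src (mk sg e) = e_src e /\ e_dst (mk sg e) = e_dst e /\
     (forall x, e_curve (mk sg e) x -> Dm k (e_src e) (e_dst e) x) /\
     (forall x, e_curve (mk sg e) x -> 0 <= sg * cross (psub (e_dst e) (e_src e)) (psub x (e_src e)) /\
        (cross (psub (e_dst e) (e_src e)) (psub x (e_src e)) = 0 -> x = e_src e \/ x = e_dst e))) ->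
  embedded_graph ok true P (map (mk 1) G0) /\ embedded_graph ok false P (map (mk 1) G0 ++ map (mk (-1)) G0).
Proof.
  intros Gd Hk HG Hmk. pose proof Gd as [GV _].
  apply emb_pw in HG as [ND [Hel [Hv Hpw]]].
  assert (Hst : forall e, In e G0 -> e_src e <> e_dst e /\ forall x, e_curve e x <-> seg (e_src e) (e_dst e) x).
  { intros e He. apply Hel; auto. }
  assert (Hpair : forall e f sg tau, (sg = 1 \/ sg = -1) -> (tau = 1 \/ tau = -1) ->
            In e G0 -> In f G0 -> Rel true e f -> RelC (mk sg e) (mk tau f)).
  { intros e f sg tau Hsg Htau He Hf [HR Hns].
    destruct (Hst e He) as [Ne Ce]. destruct (Hst f Hf) as [Nf Cf].
    destruct (Hmk e sg Hsg Ne) as [_ [Es [Ed [De _]]]].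
    destruct (Hmk f tau Htau Nf) as [_ [Fs [Fd [Df _]]]].
    destruct (Hel e He) as [Ha [Hc _]]. destruct (Hel f Hf) as [Hb [Hd _]].
    apply (diamond_RelC P k); auto; rewrite ?Es, ?Ed, ?Fs, ?Fd; auto.
    - intros [E1 E2]. apply Hns; auto. left; auto.
    - intros [E1 E2]. apply Hns; auto. right; auto.
    - intros [N1 [N2 [N3 N4]]] y Hy1 Hy2. apply Ce in Hy1. apply Cf in Hy2.
      destruct (HR y Hy1 Hy2) as [[X1|X1] [X2|X2]]; congruence. }
  assert (Hvert : forall e sg, (sg = 1 \/ sg = -1) -> In e G0 -> forall v, In v P -> e_curve (mk sg e) v -> is_endpoint (mk sg e) v).
  { intros e sg Hsg He v Hv' Hc. destruct (Hst e He) as [Ne _]. destruct (Hel e He) as [Ha [Hc' _]].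
    destruct (Hmk e sg Hsg Ne) as [_ [Es [Ed [De _]]]]. unfold is_endpoint. rewrite Es, Ed.
    destruct (classic (v = e_src e)); [left; auto|]. destruct (classic (v = e_dst e)); [right; auto|].
    exfalso. apply (GV (e_src e) (e_dst e) v); auto. apply De; auto. }
  assert (Hrel : forall e f, In e G0 -> In f G0 -> e <> f -> Rel true e f).
  { intros e f He Hf Hne. destruct (pw_In _ G0 e f Hpw He Hf Hne); auto. apply Rel_sym; auto. }
  assert (P1 : pw (Rel true) (map (mk 1) G0)).
  { apply (pw_map (Rel true)); auto. intros e f He Hf HR. split.
    - apply Hpair; auto.
    - intros _ Hs. destruct HR as [_ Hns]. apply Hns; auto.
      destruct (Hst e He) as [Ne _]. destruct (Hst f Hf) as [Nf _].
      destruct (Hmk e 1 (or_introl eq_refl) Ne) as [_ [Es [Ed _]]].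
      destruct (Hmk f 1 (or_introl eq_refl) Nf) as [_ [Fs [Fd _]]].
      unfold same_endpoints in *. rewrite Es, Ed, Fs, Fd in Hs. auto. }
  split.
  - apply emb_pw. split; [auto|split; [|split; [|auto]]].
    + intros e' He'. apply in_map_iff in He' as [e [<- He]]. destruct (Hst e He) as [Ne _].
      destruct (Hmk e 1 (or_introl eq_refl) Ne) as [Ok [Es [Ed _]]]. rewrite Es, Ed. destruct (Hel e He) as [? [? _]]. auto.
    + intros e' v He'. apply in_map_iff in He' as [e [<- He]]. apply Hvert; auto.
  - apply emb_pw. split; [auto|split; [|split]].
    + intros e' He'. apply in_app_or in He' as [He'|He']; apply in_map_iff in He' as [e [<- He]];
        destruct (Hst e He) as [Ne _]; destruct (Hel e He) as [? [? _]].
      * destruct (Hmk e 1 (or_introl eq_refl) Ne) as [Ok [Es [Ed _]]]. rewrite Es, Ed. auto.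
      * destruct (Hmk e (-1) (or_intror eq_refl) Ne) as [Ok [Es [Ed _]]]. rewrite Es, Ed. auto.
    + intros e' v He'. apply in_app_or in He' as [He'|He']; apply in_map_iff in He' as [e [<- He]]; apply Hvert; auto.
    + apply pw_app.
      * apply (pw_impl _ _ _ P1). intros x y _ _ [H1 _]. split; auto. discriminate.
      * apply (pw_map (Rel true)); auto. intros e f He Hf HR. split; [apply Hpair; auto| discriminate].
      * intros x y Hx Hy. apply in_map_iff in Hx as [e [<- He]]. apply in_map_iff in Hy as [f [<- Hf]].
        split; [|discriminate].
        destruct (classic (e = f)) as [<-|Hne].
        -- destruct (Hst e He) as [Ne _].
           destruct (Hmk e 1 (or_introl eq_refl) Ne) as [_ [Es [Ed [_ Side1]]]].
           destruct (Hmk e (-1) (or_intror eq_refl) Ne) as [_ [Fs [Fd [_ Side2]]]].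
           intros z Hz1 Hz2. destruct (Side1 z Hz1) as [A1 B1]. destruct (Side2 z Hz2) as [A2 _].
           assert (Z : cross (psub (e_dst e) (e_src e)) (psub z (e_src e)) = 0) by lra.
           unfold is_endpoint. rewrite Es, Ed, Fs, Fd. destruct (B1 Z); auto.
        -- apply Hpair; auto.
Qed.

Lemma upper_simple P m k (ok : edge -> Prop) G :
  general_position P -> Good P k -> 0 < k -> M_is P m ->
  (forall e, ok e -> nice k e /\ e_src e <> e_dst e) ->
  embedded_graph ok true P G -> (length G <= m)%nat.
Proof.
  intros GP Gd Hk HM Hok HG. apply emb_pw in HG as [ND [Hel [_ Hpw]]].
  apply (straight_bound P m k ok G GP ND Gd Hk HM Hok Hel).
  apply (pw_impl _ _ _ Hpw). intros x y _ _ [H1 H2]. split; auto.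
Qed.

Lemma upper_multi P m k (ok : edge -> Prop) G :
  general_position P -> Good P k -> 0 < k -> M_is P m ->
  (forall e, ok e -> nice k e /\ e_src e <> e_dst e) ->
  (forall e1 e2 e3, ok e1 -> ok e2 -> ok e3 -> RelC e1 e2 -> RelC e1 e3 -> RelC e2 e3 ->
     same_endpoints e1 e2 -> same_endpoints e1 e3 -> False) ->
  embedded_graph ok false P G -> (length G <= 2 * m)%nat.
Proof.
  intros GP Gd Hk HM Hok Htr HG. apply emb_pw in HG as [ND [Hel [_ Hpw]]].
  assert (Hpw' : pw RelC G) by (apply (pw_impl _ _ _ Hpw); intros x y _ _ [H1 _]; auto).
  destruct (count2 RelC same_endpoints (length G) G (le_n _) Hpw') as [H [Hinc [HpwH Hlen]]].
  { intros x y z Hx Hy Hz. apply Htr; apply Hel; auto. }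
  assert (length H <= m)%nat.
  { apply (straight_bound P m k ok H GP ND Gd Hk HM Hok); auto. }
  lia.
Qed.

Lemma angle_setup kap : 0 < kap <= 1 ->
  exists alpha0, 0 < alpha0 < PI /\ forall alpha, alpha0 < alpha < PI ->
    0 < PI - alpha < PI/2 /\ 1 <= 2 * (cos (PI - alpha) * cos (PI - alpha)) /\
    0 < sin (PI - alpha) / cos (PI - alpha) <= kap.
Proof.
  intros Hk.
  set (g := / sqrt (1 + kap * kap)).
  assert (Hs : 1 < sqrt (1 + kap * kap)).
  { replace 1 with (sqrt 1) at 1 by apply sqrt_1. apply sqrt_lt_1; nra. }
  assert (Hg : 0 < g < 1).
  { unfold g. split; [apply Rinv_0_lt_compat; lra|]. assert (HH : / sqrt (1 + kap * kap) < / 1) by (apply Rinv_lt_contravar; [rewrite Rmult_1_l; lra | lra]). rewrite Rinv_1 in HH; lra. }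
  assert (Hg2 : g * g = / (1 + kap * kap)).
  { unfold g. rewrite <- Rinv_mult. f_equal. apply sqrt_sqrt. nra. }
  exists (acos (- g)). split; [apply acos_bound_lt; lra|].
  intros alpha [H1 H2].
  assert (Hb := acos_bound_lt (- g) ltac:(lra)).
  assert (Ca0 : cos (acos (- g)) = - g) by (apply cos_acos; lra).
  assert (Ca : cos alpha < - g) by (rewrite <- Ca0; apply cos_decreasing_1; lra).
  set (th := PI - alpha).
  assert (Ct : cos th = - cos alpha) by (unfold th; apply Rtrigo_facts.cos_pi_minus).
  assert (Cg : g < cos th) by lra.
  assert (Hth : 0 < th < PI/2).
  { split; [unfold th; lra|]. destruct (Rlt_dec th (PI/2)) as [|h]; auto. exfalso. apply Rnot_lt_le in h.
    destruct h as [h|h].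
    - assert (cos th < cos (PI/2)) by (apply cos_decreasing_1; unfold th in *; lra). rewrite cos_PI2 in H. lra.
    - rewrite <- h, cos_PI2 in Cg. lra. }
  assert (Sth : 0 < sin th) by (apply sin_gt_0; lra).
  pose proof (sin2_cos2 th) as SC. unfold Rsqr in SC.
  assert (Cg2 : / (1 + kap * kap) < cos th * cos th) by (rewrite <- Hg2; nra).
  split; [auto|split].
  - assert (/ 2 <= / (1 + kap * kap)) by (apply Rinv_le_contravar; nra). lra.
  - split; [apply Rdiv_lt_0_compat; lra|].
    assert (sin th * sin th < kap * kap * (cos th * cos th)).
    { assert (1 < (1 + kap * kap) * (cos th * cos th)).
      { apply Rmult_lt_reg_l with (/ (1 + kap * kap)); [apply Rinv_0_lt_compat; nra|].
        rewrite <- Rmult_assoc, Rinv_l, Rmult_1_l, Rmult_1_r by nra. auto. }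
      nra. }
    assert (sin th < kap * cos th).
    { assert (0 < kap * cos th) by (apply Rmult_lt_0_compat; lra).
      destruct (Rlt_dec (sin th) (kap * cos th)) as [|n]; auto. exfalso. apply Rnot_lt_le in n.
      assert ((kap*cos th)*(kap*cos th) <= sin th * sin th) by (apply Rmult_le_compat; lra). nra. }
    apply Rmult_le_reg_r with (cos th); [lra|]. unfold Rdiv. rewrite Rmult_assoc, Rinv_l by lra. lra.
Qed.

Theorem proposition4 :
  forall P : list pt, NoDup P -> general_position P ->
  exists alpha0 : R, 0 < alpha0 < PI /\
    forall alpha : R, alpha0 < alpha < PI ->
    forall m : nat, M_is P m ->
      Ma_is P alpha m /\ Mb_is P alpha m /\
      Ma_multi_is P alpha (2 * m) /\ Mb_multi_is P alpha (2 * m).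
Proof.
  intros P ND GP.
  destruct (good_exists P GP) as [k0 [Hk0 HGood]].
  destruct (angle_setup (Rmin k0 1)) as [alpha0 [Ha0 Hang]].
  { split; [apply Rmin_case; lra| apply Rmin_r]. }
  exists alpha0. split; auto.
  intros alpha Halpha m HM.
  destruct (Hang alpha Halpha) as [Hth [HCt [Hk Hkk]]].
  set (k := sin (PI - alpha) / cos (PI - alpha)) in *.
  assert (Gd : Good P k) by (apply HGood; split; [lra|]; pose proof (Rmin_l k0 1); lra).
  assert (Hk' : 0 < k) by lra.
  assert (OkA : forall e, arc_edge alpha e -> nice k e /\ e_src e <> e_dst e).
  { intros e He. split; [apply arc_nice; auto| apply He]. }
  assert (OkB : forall e, bend_edge alpha e -> nice k e /\ e_src e <> e_dst e).
  { intros e He. split; [apply bend_nice; auto|]. destruct He as [b [Hn _]]. apply (ncol_ne3 _ b _ Hn). }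
  destruct HM as [[G0 [HG0 HL0]] HMb].
  assert (HM : M_is P m) by (split; [exists G0; auto| auto]).
  assert (LA := lower_generic P k (arc_edge alpha) (mkArc alpha) G0 Gd Hk' HG0).
  assert (LB := lower_generic P k (bend_edge alpha) (mkBend alpha) G0 Gd Hk' HG0).
  destruct LA as [LA1 LA2].
  { intros e sg Hsg Hne. destruct (mkArc_props alpha sg e Hth Hsg Hne) as [Ok [Es [Ed Side]]].
    split; [auto|split; [auto|split; [auto|split; [|auto]]]].
    intros x Hx. destruct (OkA _ Ok) as [[N _] _]. rewrite <- Es, <- Ed. apply N; auto. }
  destruct LB as [LB1 LB2].
  { intros e sg Hsg Hne. destruct (mkBend_props alpha sg e Hth Hsg Hne) as [Ok [Es [Ed Side]]].
    split; [auto|split; [auto|split; [auto|split; [|auto]]]].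
    intros x Hx. destruct (OkB _ Ok) as [[N _] _]. rewrite <- Es, <- Ed. apply N; auto. }
  split; [|split; [|split]].
  - split.
    + exists (map (mkArc alpha 1) G0). split; auto. rewrite length_map; auto.
    + intros G HG. apply (upper_simple P m k (arc_edge alpha) G GP Gd Hk' HM OkA HG).
  - split.
    + exists (map (mkBend alpha 1) G0). split; auto. rewrite length_map; auto.
    + intros G HG. apply (upper_simple P m k (bend_edge alpha) G GP Gd Hk' HM OkB HG).
  - split.
    + exists (map (mkArc alpha 1) G0 ++ map (mkArc alpha (-1)) G0). split; auto.
      rewrite length_app, !length_map. lia.
    + intros G HG. apply (upper_multi P m k (arc_edge alpha) G GP Gd Hk' HM OkA); auto.
      apply (triple_bpt (arc_edge alpha) (sin (PI - alpha) / (2 * (1 + cos (PI - alpha))))).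
      * assert (0 < cos (PI - alpha)) by (apply cos_gt_0; lra).
        apply Rdiv_lt_0_compat; [apply sin_gt_0; lra| lra].
      * intros e He. split; [apply He|]. apply arc_mid_curve; auto.
  - split.
    + exists (map (mkBend alpha 1) G0 ++ map (mkBend alpha (-1)) G0). split; auto.
      rewrite length_app, !length_map. lia.
    + intros G HG. apply (upper_multi P m k (bend_edge alpha) G GP Gd Hk' HM OkB); auto.
      apply bend_triple; auto.
Qed.
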